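(* In the algebra $\mathcal{A}$ described in the context, the element \[A^{\mathrm{bi}}_{s;mn}(W)=(E_n-sQ_n^2)(sQ_m^2E_m-1)-(E_m-sQ_m^2)(sQ_n^2E_n-1)\] is a right divisor of \[P^1_W(s,sE_n,Q_n)\,Y(s,sE_n,Q_n)\,\mathfrak{A}_m(W)(s,E_m,Q_m,Q_n)-P^1_W(s,sE_m,Q_m)\,Y(s,sE_m,Q_m)\,\mathfrak{A}_n(W)(s,E_n,Q_m,Q_n),\] i.e. this element equals $C\,A^{\mathrm{bi}}_{s;mn}(W)$ for some $C\in\mathcal{A}$.
   Context: $s$ is an indeterminate. $\mathcal{A}$ is the algebra of noncommutative polynomials in $E_m,E_n$ with coefficients in $\mathbb{Q}(s,Q_m,Q_n)$ written on the left, subject to $E_mE_n=E_nE_m$, $E_m\,p(s,Q_m,Q_n)=p(s,sQ_m,Q_n)E_m$, $E_n\,p(s,Q_m,Q_n)=p(s,Q_m,sQ_n)E_n$ (these are the composition rules of the operators $(E_mf)(m,n)=f(m+1,n)$, $(E_nf)(m,n)=f(m,n+1)$, $(Q_mf)(m,n)=s^mf(m,n)$, $(Q_nf)(m,n)=s^nf(m,n)$). For a pair $(E,Q)$ with $EQ=sQE$ put $\Phi_k(Q)=1-s^kQ^4$ and $u_1(s,E,Q)=\frac{1}{\Phi_6(Q)}E-\frac{s^2Q^2}{\Phi_2(Q)}$, $v_1(s,E,Q)=\frac{s^2Q^2}{\Phi_6(Q)}E-\frac{1}{\Phi_2(Q)}$, $u_2(s,E,Q)=\frac{s^{12}Q^4}{\Phi_{10}(Q)\Phi_{12}(Q)}E^2-\frac{s^4(1+s^2)Q^2}{\Phi_6(Q)\Phi_{10}(Q)}E+\frac{1}{\Phi_4(Q)\Phi_6(Q)}$,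 $v_2(s,E,Q)=\frac{1}{\Phi_{10}(Q)\Phi_{12}(Q)}E^2-\frac{s^2(1+s^2)Q^2}{\Phi_6(Q)\Phi_{10}(Q)}E+\frac{s^4Q^4}{\Phi_4(Q)\Phi_6(Q)}$, $Y(s,E,Q)=u_2u_1(E-s^2Q^2)$, and $P^1_W(s,E,Q)=(E+1)\frac{(1-s^2Q^2)(1-s^6Q^2)}{1+s^4Q^2}$; $P^1_W(s,sE,Q)$ and $Y(s,sE,Q)$ mean substituting $sE$ for $E$. With $u_i,v_i,Y$ taken at $(s,E_m,Q_m)$ define $P^0_W(s,E_m,Q_m,Q_n)=(s^2-s^4)u_2v_1(Q_m^2E_m-1)+s^2(Q_n^2+1+Q_n^{-2})u_2u_1(Q_m^2E_m-1)+s^2u_2u_1(s^2Q_m^2+s^{-2}Q_m^{-2})(Q_m^2E_m-1)+(s^2-s^4)u_2(Q_m^2E_m-1)-Y(Q_m^2Q_n^2+Q_m^2Q_n^{-2}+3+Q_m^{-2}Q_n^2+Q_m^{-2}Q_n^{-2})+s^{-2}(Q_n^2-s^2+Q_n^{-2})v_2v_1(E_m-s^2Q_m^2)+s^{-2}v_2v_1(s^2Q_m^2+s^{-2}Q_m^{-2})(E_m-s^2Q_m^2)+(s^{-4}-s^{-2})v_2Q_m^{-2}(E_m-s^2Q_m^2)-s^{-4}v_2u_1(E_m-s^2Q_m^2)$, and $\mathfrak{A}_m(W)(s,E_m,Q_m,Q_n)=P^1_W(s,sE_m,Q_m)P^0_W(s,sE_m,Q_m,Q_n)$ (substitute $sE_m$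 for $E_m$). $\mathfrak{A}_n(W)(s,E_n,Q_m,Q_n)$ is the same expression with $E_m$ replaced by $E_n$ and the roles of $Q_m$ and $Q_n$ interchanged. (These are annihilating operators of the colored Jones polynomial of the Whitehead link.) *)

(* Defs.v *)
From HB Require Import structures.
From mathcomp Require Import all_boot all_order all_algebra.
From mathcomp Require Import fraction.
From mathcomp.multinomials Require Import mpoly.
Set Implicit Arguments. Unset Strict Implicit. Unset Printing Implicit Defensive.
Import Order.TTheory GRing.Theory.
Local Open Scope ring_scope.

(* The coefficient field Q(s, Q_m, Q_n): fractions of {mpoly rat[3]},      *)
Definition Rpol := {mpoly rat[3]}.
Definition K := {fraction Rpol}.

Definition var (i : 'I_3) : K := tofrac ('X_i : Rpol).
Definition s_ : K := var 0.
Definition Qm : K := var 1.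
Definition Qn : K := var 2.

Definition frac_lift (f : Rpol -> Rpol) (x : K) : K :=
  tofrac (f \n_(repr x)) / tofrac (f \d_(repr x)).

Definition sigm_pol (p : Rpol) : Rpol :=
  p \mPo [tuple 'X_0; 'X_0 * 'X_1; 'X_2].
Definition sign_pol (p : Rpol) : Rpol :=
  p \mPo [tuple 'X_0; 'X_1; 'X_0 * 'X_2].
Definition sigm : K -> K := frac_lift sigm_pol.
Definition sign : K -> K := frac_lift sign_pol.

(* The Ore algebra A: an element is sum_{i,j} c_{ij} E_m^i E_n^j with      *)
(* coefficients written on the left; we store the coefficient function    *)
(* (i,j) |-> c_{ij}.  Genuine elements of A are the finitely supported    *)
(* ones (predicate [fin_supp]).                                           *)
Definition ore := nat -> nat -> K.

Definition fin_supp (f : ore) : Prop :=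
  exists N : nat, forall i j : nat, (N <= i)%N || (N <= j)%N -> f i j = 0.

Definition oc (c : K) : ore := fun i j => if (i == 0%N) && (j == 0%N) then c else 0.
Definition oEm : ore := fun i j => if (i == 1%N) && (j == 0%N) then 1 else 0.
Definition oEn : ore := fun i j => if (i == 0%N) && (j == 1%N) then 1 else 0.
Definition oadd (f g : ore) : ore := fun i j => f i j + g i j.
Definition oopp (f : ore) : ore := fun i j => - f i j.
(* (c E_m^i E_n^j)(d E_m^k E_n^l) = c sigm^i(sign^j(d)) E_m^(i+k) E_n^(j+l) *)
Definition omul (f g : ore) : ore := fun a b =>
  \sum_(i < a.+1) \sum_(j < b.+1)
     f i j * iter i sigm (iter j sign (g (a - i)%N (b - j)%N)).

Declare Scope ore_scope.
Delimit Scope ore_scope with ore.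
Notation "x + y" := (oadd x y) : ore_scope.
Notation "x - y" := (oadd x (oopp y)) : ore_scope.
Notation "x * y" := (omul x y) : ore_scope.
Notation "c %:O" := (oc c) (at level 2, format "c %:O") : ore_scope.

Local Open Scope ore_scope.

Definition Phi (k : nat) (Q : K) : K := (1 - s_ ^+ k * Q ^+ 4)%R.

Definition u1 (E : ore) (Q : K) : ore :=
  (1 / Phi 6 Q)%R%:O * E - (s_ ^+ 2 * Q ^+ 2 / Phi 2 Q)%R%:O.
Definition v1 (E : ore) (Q : K) : ore :=
  (s_ ^+ 2 * Q ^+ 2 / Phi 6 Q)%R%:O * E - (1 / Phi 2 Q)%R%:O.
Definition u2 (E : ore) (Q : K) : ore :=
  (s_ ^+ 12 * Q ^+ 4 / (Phi 10 Q * Phi 12 Q))%R%:O * (E * E)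
  - (s_ ^+ 4 * (1 + s_ ^+ 2) * Q ^+ 2 / (Phi 6 Q * Phi 10 Q))%R%:O * E
  + (1 / (Phi 4 Q * Phi 6 Q))%R%:O.
Definition v2 (E : ore) (Q : K) : ore :=
  (1 / (Phi 10 Q * Phi 12 Q))%R%:O * (E * E)
  - (s_ ^+ 2 * (1 + s_ ^+ 2) * Q ^+ 2 / (Phi 6 Q * Phi 10 Q))%R%:O * E
  + (s_ ^+ 4 * Q ^+ 4 / (Phi 4 Q * Phi 6 Q))%R%:O.
Definition Y (E : ore) (Q : K) : ore :=
  u2 E Q * u1 E Q * (E - (s_ ^+ 2 * Q ^+ 2)%R%:O).
Definition P1 (E : ore) (Q : K) : ore :=
  (E + 1%:O) * ((1 - s_ ^+ 2 * Q ^+ 2) * (1 - s_ ^+ 6 * Q ^+ 2)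
                / (1 + s_ ^+ 4 * Q ^+ 2))%R%:O.

(* P^0_W(s, E, Q, Q') where (E,Q) is the active pair and Q' the other one *)
Definition P0 (E : ore) (Q Q' : K) : ore :=
  let U1 := u1 E Q in let V1 := v1 E Q in
  let U2 := u2 E Q in let V2 := v2 E Q in
  let F1 := (Q ^+ 2)%R%:O * E - 1%:O in
  let F2 := E - (s_ ^+ 2 * Q ^+ 2)%R%:O in
     (s_ ^+ 2 - s_ ^+ 4)%R%:O * U2 * V1 * F1
   + (s_ ^+ 2 * (Q' ^+ 2 + 1 + Q' ^- 2))%R%:O * U2 * U1 * F1
   + (s_ ^+ 2)%R%:O * U2 * U1 * (s_ ^+ 2 * Q ^+ 2 + s_ ^- 2 * Q ^- 2)%R%:O * F1
   + (s_ ^+ 2 - s_ ^+ 4)%R%:O * U2 * F1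
   - Y E Q * (Q ^+ 2 * Q' ^+ 2 + Q ^+ 2 * Q' ^- 2 + 3
              + Q ^- 2 * Q' ^+ 2 + Q ^- 2 * Q' ^- 2)%R%:O
   + (s_ ^- 2 * (Q' ^+ 2 - s_ ^+ 2 + Q' ^- 2))%R%:O * V2 * V1 * F2
   + (s_ ^- 2)%R%:O * V2 * V1 * (s_ ^+ 2 * Q ^+ 2 + s_ ^- 2 * Q ^- 2)%R%:O * F2
   + (s_ ^- 4 - s_ ^- 2)%R%:O * V2 * (Q ^- 2)%R%:O * F2
   - (s_ ^- 4)%R%:O * V2 * U1 * F2.

Definition sEm : ore := s_%:O * oEm.
Definition sEn : ore := s_%:O * oEn.

Definition frakAm : ore := P1 sEm Qm * P0 sEm Qm Qn.
Definition frakAn : ore := P1 sEn Qn * P0 sEn Qn Qm.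

Definition Abi : ore :=
  (oEn - (s_ * Qn ^+ 2)%R%:O) * ((s_ * Qm ^+ 2)%R%:O * oEm - 1%:O)
  - (oEm - (s_ * Qm ^+ 2)%R%:O) * ((s_ * Qn ^+ 2)%R%:O * oEn - 1%:O).

Definition bigop_elt : ore :=
  P1 sEn Qn * Y sEn Qn * frakAm - P1 sEm Qm * Y sEm Qm * frakAn.

(* Main.v *)
From HB Require Import structures.
From mathcomp Require Import all_boot all_order all_algebra fraction.
From mathcomp.multinomials Require Import mpoly.
From mathcomp Require Import ring generic_quotient.
Require Import Defs.
Set Implicit Arguments. Unset Strict Implicit. Unset Printing Implicit Defensive.
Import Order.TTheory GRing.Theory.
Local Open Scope ring_scope.
Local Open Scope quotient_scope.

Lemma fracE (x : K) : x = tofrac (\n_(repr x)) / tofrac (\d_(repr x)).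
Proof.
set r := repr x.
have d0 : \d_r != 0 := denom_ratioP r.
have dF : tofrac (\d_r) != 0 by rewrite tofrac_eq0.
apply: (mulIf dF); rewrite mulfVK //.
have E1 : forall p : Rpol, tofrac p = \pi_K (Ratio p 1).
  by move=> p; unlock FracField.tofrac.
rewrite !E1.
rewrite -[x in LHS]reprK -/r.
have := FracField.pi_mul r (Ratio \d_r 1).
move=> H. 
change (FracField.mul (\pi_K r) (\pi_K (Ratio \d_r 1)) = \pi_K (Ratio \n_r 1)).
rewrite -H.
apply/eqmodP; rewrite /= FracField.equivfE /FracField.mulf /=.
rewrite !numden_Ratio; try exact: oner_neq0.
- apply/eqP; ring.
- by rewrite mulr1.
- by rewrite mulr1.
Qed.

Lemma tofrac_inj (p q : Rpol) : tofrac p = tofrac q -> p = q.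
Proof. by move/eqP; rewrite tofrac_eq => /eqP. Qed.

Lemma fracP (x : K) : exists a b, b != 0 /\ x = tofrac a / tofrac b.
Proof. exists (\n_(repr x)), (\d_(repr x)); split; [exact: denom_ratioP | exact: fracE]. Qed.

Lemma gen_sub (F : fieldType) (A B C E : F) : B != 0 -> E != 0 -> A / B - C / E = (A * E - C * B) / (B * E).
Proof. move=> hb he. field. by rewrite hb he. Qed.
Lemma gen_mul (F : fieldType) (A B C E : F) : B != 0 -> E != 0 -> A / B * (C / E) = (A * C) / (B * E).
Proof. move=> hb he. field. by rewrite hb he. Qed.

Section FL.
Variable g : {rmorphism Rpol -> Rpol}.
Hypothesis ginj : forall p, g p = 0 -> p = 0.

Lemma gnz b : b != 0 -> g b != 0.
Proof. by apply: contra => /eqP /ginj ->. Qed.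

Lemma tfnz (b : Rpol) : b != 0 -> tofrac b != 0.
Proof. by rewrite tofrac_eq0. Qed.

Lemma fl_div a b : b != 0 -> frac_lift g (tofrac a / tofrac b) = tofrac (g a) / tofrac (g b).
Proof.
move=> b0; rewrite /frac_lift.
set x := tofrac a / tofrac b.
have E := fracE x.
set n := \n_(repr x) in E *; set d := \d_(repr x) in E *.
have d0 : d != 0 := denom_ratioP (repr x).
have H : a * d = n * b.
  apply: tofrac_inj; rewrite !rmorphM.
  by move: E => /eqP; rewrite /x eqr_div ?tfnz // => /eqP.
apply/eqP; rewrite eqr_div ?tfnz ?gnz //.
by rewrite -!rmorphM H.
Qed.

Lemma fl_tofrac p : frac_lift g (tofrac p) = tofrac (g p).
Proof.
have -> : tofrac p = tofrac p / tofrac 1 by rewrite rmorph1 divr1.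
by rewrite fl_div ?oner_neq0 // rmorph1 rmorph1 divr1.
Qed.

Lemma fl_zmod : zmod_morphism (frac_lift g).
Proof.
move=> x y.
have [a [b [b0 Ex]]] := fracP x.
have [c [e [e0 Ey]]] := fracP y.
subst x y.
have be0 : b * e != 0 by apply: mulf_neq0.
have E1 : tofrac a / tofrac b - tofrac c / tofrac e = tofrac (a*e - c*b) / tofrac (b*e).
  by rewrite gen_sub ?tfnz // rmorphB !rmorphM.
rewrite E1 !fl_div //.
by rewrite gen_sub ?tfnz ?gnz // !rmorphB !rmorphM.
Qed.

Lemma fl_monoid : monoid_morphism (frac_lift g).
Proof.
split.
  have -> : (1 : K) = tofrac 1 by rewrite rmorph1.
  by rewrite fl_tofrac !rmorph1.
move=> x y.
have [a [b [b0 Ex]]] := fracP x.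
have [c [e [e0 Ey]]] := fracP y.
subst x y.
have be0 : b * e != 0 by apply: mulf_neq0.
have E1 : tofrac a / tofrac b * (tofrac c / tofrac e) = tofrac (a*c) / tofrac (b*e).
  by rewrite gen_mul ?tfnz // !rmorphM.
rewrite E1 !fl_div //.
by rewrite gen_mul ?tfnz ?gnz // !rmorphM.
Qed.
End FL.

From Stdlib Require Import FunctionalExtensionality.

Definition cK : {rmorphism rat -> K} := (@tofrac Rpol \o @mpolyC 3 rat)%FUN.

Lemma mmap_Xi (h : 'I_3 -> K) (i : 'I_3) : mmap cK h 'X_i = h i.
Proof. by rewrite mmapX mmap1U. Qed.

Lemma mmapMK (h : 'I_3 -> K) p q : mmap cK h (p * q) = mmap cK h p * mmap cK h q.
Proof. exact: rmorphM. Qed.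

Lemma mmap_comp (h : 'I_3 -> K) (lq : 3.-tuple Rpol) p :
  mmap cK h (p \mPo lq) = mmap cK (fun i => mmap cK h (tnth lq i)) p.
Proof.
elim/mpolyind: p => [|c m p _ _ IH].
  by rewrite comp_mpoly0 !mmap0.
rewrite comp_mpolyD comp_mpolyZ comp_mpolyX !mmapD !mmapZ IH mmapX.
congr (_ * _ + _).
by rewrite rmorph_prod; apply: eq_bigr => i _; rewrite rmorphXn.
Qed.

Lemma mmap_tofrac p : mmap cK (fun i => tofrac 'X_i) p = tofrac p.
Proof.
elim/mpolyind: p => [|c m p _ _ IH].
  by rewrite mmap0 rmorph0.
rewrite mmapD mmapZ IH mmapX rmorphD; congr (_ + _).
rewrite -mul_mpolyC rmorphM; congr (_ * _).
by rewrite [in RHS]mpolyXE_id rmorph_prod; apply: eq_bigr => i _; rewrite rmorphXn.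
Qed.

Lemma Xi_neq0 (i : 'I_3) : ('X_i : Rpol) != 0.
Proof.
apply/eqP => H.
have := mevalXU (fun _ => (1 : rat)) i.
by rewrite H meval0 => /eqP; rewrite eq_sym oner_eq0.
Qed.

Lemma var_neq0 i : var i != 0.
Proof. by rewrite /var tofrac_eq0 Xi_neq0. Qed.

Definition tmm : 3.-tuple Rpol := [tuple 'X_0; 'X_0 * 'X_1; 'X_2].
Definition tmn : 3.-tuple Rpol := [tuple 'X_0; 'X_1; 'X_0 * 'X_2].

Lemma injm p : comp_mpoly tmm p = 0 -> p = 0.
Proof.
move=> H; apply: tofrac_inj; rewrite rmorph0.
pose h : 'I_3 -> K := fun i => if val i == 1%N then var 1 / var 0 else var i.
have Eh : (fun i : 'I_3 => tofrac ('X_i : Rpol)) = (fun i => mmap cK h (tnth tmm i)).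
  apply: functional_extensionality => -[[|[|[|k]]] Hk].
  - have -> : Ordinal Hk = (0 : 'I_3) by exact: val_inj.
    have -> : tnth tmm 0 = 'X_0 by [].
    by rewrite mmap_Xi.
  - have -> : Ordinal Hk = (1 : 'I_3) by exact: val_inj.
    have -> : tnth tmm 1 = 'X_0 * 'X_1 by [].
    rewrite mmapMK !mmap_Xi /h /= mulrC -mulrA mulVf ?mulr1 //.
    exact: (var_neq0 0).
  - have -> : Ordinal Hk = (2 : 'I_3) by exact: val_inj.
    have -> : tnth tmm 2 = 'X_2 by [].
    by rewrite mmap_Xi.
  - by [].
by rewrite -mmap_tofrac Eh -mmap_comp H mmap0.
Qed.

Lemma injn p : comp_mpoly tmn p = 0 -> p = 0.
Proof.
move=> H; apply: tofrac_inj; rewrite rmorph0.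
pose h : 'I_3 -> K := fun i => if val i == 2%N then var 2 / var 0 else var i.
have Eh : (fun i : 'I_3 => tofrac ('X_i : Rpol)) = (fun i => mmap cK h (tnth tmn i)).
  apply: functional_extensionality => -[[|[|[|k]]] Hk].
  - have -> : Ordinal Hk = (0 : 'I_3) by exact: val_inj.
    have -> : tnth tmn 0 = 'X_0 by [].
    by rewrite mmap_Xi.
  - have -> : Ordinal Hk = (1 : 'I_3) by exact: val_inj.
    have -> : tnth tmn 1 = 'X_1 by [].
    by rewrite mmap_Xi.
  - have -> : Ordinal Hk = (2 : 'I_3) by exact: val_inj.
    have -> : tnth tmn 2 = 'X_0 * 'X_2 by [].
    rewrite mmapMK !mmap_Xi /h /= mulrC -mulrA mulVf ?mulr1 //.
    exact: (var_neq0 0).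
  - by [].
by rewrite -mmap_tofrac Eh -mmap_comp H mmap0.
Qed.

Lemma sigm_zmod : zmod_morphism sigm.
Proof. exact: (fl_zmod (g := comp_mpoly tmm) injm). Qed.
Lemma sigm_monoid : monoid_morphism sigm.
Proof. exact: (fl_monoid (g := comp_mpoly tmm) injm). Qed.
Lemma sign_zmod : zmod_morphism sign.
Proof. exact: (fl_zmod (g := comp_mpoly tmn) injn). Qed.
Lemma sign_monoid : monoid_morphism sign.
Proof. exact: (fl_monoid (g := comp_mpoly tmn) injn). Qed.

HB.instance Definition _ := GRing.isZmodMorphism.Build K K sigm sigm_zmod.
HB.instance Definition _ := GRing.isMonoidMorphism.Build K K sigm sigm_monoid.
HB.instance Definition _ := GRing.isZmodMorphism.Build K K sign sign_zmod.
HB.instance Definition _ := GRing.isMonoidMorphism.Build K K sign sign_monoid.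

Lemma sigm_tofrac p : sigm (tofrac p) = tofrac (comp_mpoly tmm p).
Proof. exact: (fl_tofrac (g := comp_mpoly tmm) injm). Qed.
Lemma sign_tofrac p : sign (tofrac p) = tofrac (comp_mpoly tmn p).
Proof. exact: (fl_tofrac (g := comp_mpoly tmn) injn). Qed.

Lemma sigm_s : sigm s_ = s_.
Proof. by rewrite /s_ /var sigm_tofrac comp_mpolyXU. Qed.
Lemma sigm_Qm : sigm Qm = s_ * Qm.
Proof. by rewrite /Qm /s_ /var sigm_tofrac comp_mpolyXU -rmorphM. Qed.
Lemma sigm_Qn : sigm Qn = Qn.
Proof. by rewrite /Qn /var sigm_tofrac comp_mpolyXU. Qed.
Lemma sign_s : sign s_ = s_.
Proof. by rewrite /s_ /var sign_tofrac comp_mpolyXU. Qed.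
Lemma sign_Qm : sign Qm = Qm.
Proof. by rewrite /Qm /var sign_tofrac comp_mpolyXU. Qed.
Lemma sign_Qn : sign Qn = s_ * Qn.
Proof. by rewrite /Qn /s_ /var sign_tofrac comp_mpolyXU -rmorphM. Qed.

Lemma test_inv (x : K) : sigm (x^-1) = (sigm x)^-1.
Proof. by rewrite fmorphV. Qed.


Lemma sigmD (x y : K) : sigm (x + y) = sigm x + sigm y. Proof. exact: rmorphD. Qed.
Lemma sigmB (x y : K) : sigm (x - y) = sigm x - sigm y. Proof. exact: rmorphB. Qed.
Lemma sigmN (x : K) : sigm (- x) = - sigm x. Proof. exact: rmorphN. Qed.
Lemma sigmM (x y : K) : sigm (x * y) = sigm x * sigm y. Proof. exact: rmorphM. Qed.
Lemma sigmV (x : K) : sigm (x^-1) = (sigm x)^-1. Proof. exact: fmorphV. Qed.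
Lemma sigmX (x : K) n : sigm (x ^+ n) = (sigm x) ^+ n. Proof. exact: rmorphXn. Qed.
Lemma sigm0 : sigm 0 = 0. Proof. exact: rmorph0. Qed.
Lemma sigm1 : sigm 1 = 1. Proof. exact: rmorph1. Qed.
Lemma sigm_nat n : sigm (n%:R) = n%:R. Proof. exact: rmorph_nat. Qed.

Lemma signD (x y : K) : sign (x + y) = sign x + sign y. Proof. exact: rmorphD. Qed.
Lemma signB (x y : K) : sign (x - y) = sign x - sign y. Proof. exact: rmorphB. Qed.
Lemma signN (x : K) : sign (- x) = - sign x. Proof. exact: rmorphN. Qed.
Lemma signM (x y : K) : sign (x * y) = sign x * sign y. Proof. exact: rmorphM. Qed.
Lemma signV (x : K) : sign (x^-1) = (sign x)^-1. Proof. exact: fmorphV. Qed.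
Lemma signX (x : K) n : sign (x ^+ n) = (sign x) ^+ n. Proof. exact: rmorphXn. Qed.
Lemma sign0 : sign 0 = 0. Proof. exact: rmorph0. Qed.
Lemma sign1 : sign 1 = 1. Proof. exact: rmorph1. Qed.
Lemma sign_nat n : sign (n%:R) = n%:R. Proof. exact: rmorph_nat. Qed.

Inductive ex : Type :=
| Z | O | Nc (n : nat) | Sv | Mv | Nv
| Add (x y : ex) | Opp (x : ex) | Mul (x y : ex) | Inv (x : ex) | Pw (x : ex) (n : nat)
| Mon (neg : bool) (c i j k : nat)
| Fac (neg : bool) (a : nat) (v : bool).

Fixpoint ev (F : fieldType) (s qm qn : F) (e : ex) : F :=
  match e with
  | Z => 0 | O => 1 | Nc n => n%:R | Sv => s | Mv => qm | Nv => qn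
  | Add x y => ev s qm qn x + ev s qm qn y
  | Opp x => - ev s qm qn x
  | Mul x y => ev s qm qn x * ev s qm qn y
  | Inv x => (ev s qm qn x)^-1
  | Pw x n => ev s qm qn x ^+ n
  | Mon neg c i j k => (if neg then - c%:R else c%:R) * (s ^+ i * (qm ^+ j * qn ^+ k))
  | Fac neg a v => if neg then 1 - s ^+ a * (if v then qn else qm) ^+ 2
                   else 1 + s ^+ a * (if v then qn else qm) ^+ 2
  end.

Definition evK (e : ex) : K := ev s_ Qm Qn e.

Fixpoint shm (e : ex) : ex :=
  match e with
  | Mv => Mul Sv Mv
  | Add x y => Add (shm x) (shm y)
  | Opp x => Opp (shm x)
  | Mul x y => Mul (shm x) (shm y)
  | Inv x => Inv (shm x)
  | Pw x n => Pw (shm x) n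
  | Mon neg c i j k => Mon neg c (i + j) j k
  | Fac neg a false => Fac neg (a + 2) false
  | e => e
  end.

Fixpoint shn (e : ex) : ex :=
  match e with
  | Nv => Mul Sv Nv
  | Add x y => Add (shn x) (shn y)
  | Opp x => Opp (shn x)
  | Mul x y => Mul (shn x) (shn y)
  | Inv x => Inv (shn x)
  | Pw x n => Pw (shn x) n
  | Mon neg c i j k => Mon neg c (i + k) j k
  | Fac neg a true => Fac neg (a + 2) true
  | e => e
  end.

Lemma gen_monm (R : comRingType) (s qm qn : R) i j k :
  s ^+ i * ((s * qm) ^+ j * qn ^+ k) = s ^+ (i + j) * (qm ^+ j * qn ^+ k).
Proof. by rewrite exprMn exprD !mulrA. Qed.
Lemma gen_monn (R : comRingType) (s qm qn : R) i j k :
  s ^+ i * (qm ^+ j * (s * qn) ^+ k) = s ^+ (i + k) * (qm ^+ j * qn ^+ k).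
Proof. rewrite exprMn exprD. move: (s ^+ i) (s^+k) (qm^+j) (qn^+k) => a b c d. ring. Qed.
Lemma gen_fac (R : comRingType) (s q : R) a :
  s ^+ a * (s * q) ^+ 2 = s ^+ (a + 2) * q ^+ 2.
Proof. by rewrite exprMn exprD !mulrA. Qed.

Lemma ev_shm e : sigm (evK e) = evK (shm e).
Proof.
rewrite /evK; elim: e => [|||||| x IHx y IHy | x IHx | x IHx y IHy | x IHx | x IHx n
   | neg c i j k | neg a [|]] /=.
- exact: sigm0.
- exact: sigm1.
- exact: sigm_nat.
- exact: sigm_s.
- exact: sigm_Qm.
- exact: sigm_Qn.
- by rewrite sigmD IHx IHy.
- by rewrite sigmN IHx.
- by rewrite sigmM IHx IHy.
- by rewrite sigmV IHx.
- by rewrite sigmX IHx.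
- rewrite sigmM !sigmM !sigmX sigm_s sigm_Qm sigm_Qn gen_monm; congr (_ * _).
  by case: neg; rewrite ?sigmN sigm_nat.
- by case: neg; rewrite ?sigmB ?sigmD sigm1 sigmM !sigmX sigm_s sigm_Qn.
- by case: neg; rewrite ?sigmB ?sigmD sigm1 sigmM !sigmX sigm_s sigm_Qm gen_fac.
Qed.

Lemma ev_shn e : sign (evK e) = evK (shn e).
Proof.
rewrite /evK; elim: e => [|||||| x IHx y IHy | x IHx | x IHx y IHy | x IHx | x IHx n
   | neg c i j k | neg a [|]] /=.
- exact: sign0.
- exact: sign1.
- exact: sign_nat.
- exact: sign_s.
- exact: sign_Qm.
- exact: sign_Qn.
- by rewrite signD IHx IHy.
- by rewrite signN IHx.
- by rewrite signM IHx IHy.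
- by rewrite signV IHx.
- by rewrite signX IHx.
- rewrite signM !signM !signX sign_s sign_Qm sign_Qn gen_monn; congr (_ * _).
  by case: neg; rewrite ?signN sign_nat.
- by case: neg; rewrite ?signB ?signD sign1 signM !signX sign_s sign_Qn gen_fac.
- by case: neg; rewrite ?signB ?signD sign1 signM !signX sign_s sign_Qm.
Qed.

From mathcomp Require Import zify.

Definition mat := seq (seq ex).
Definition nth2 (L : mat) i j := nth Z (nth [::] L i) j.
Definition width (L : mat) := foldr (fun r m => maxn (size r) m) 0%N L.
Definition ofe (L : mat) : ore := fun i j => evK (nth2 L i j).

Lemma size_row_width L i : (size (nth [::] L i) <= width L)%N.
Proof.
elim: L i => [|r L IH] [|i] //=; first exact: leq_maxl.
exact: leq_trans (IH i) (leq_maxr _ _).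
Qed.

Lemma nth2_out L i j : (size L <= i)%N || (width L <= j)%N -> nth2 L i j = Z.
Proof.
rewrite /nth2 => /orP [H|H]; first by rewrite (nth_default [::] H) nth_nil.
have H' := size_row_width L i; apply: nth_default; lia.
Qed.

Lemma evK0 : evK Z = 0. Proof. by []. Qed.

Definition isZ e := if e is Z then true else false.
Lemma isZP e : isZ e -> e = Z. Proof. by case: e. Qed.
Definition addS x y := if isZ x then y else if isZ y then x else Add x y.
Definition mulS x y := if isZ x then Z else if isZ y then Z else Mul x y.
Definition oppS x := if isZ x then Z else Opp x.

Lemma ev_addS x y : evK (addS x y) = evK x + evK y.
Proof.
rewrite /addS; case: ifP => [/isZP -> | _]; first by rewrite evK0 add0r.
by case: ifP => [/isZP -> | _]; first by rewrite evK0 addr0.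
Qed.
Lemma ev_mulS x y : evK (mulS x y) = evK x * evK y.
Proof.
rewrite /mulS; case: ifP => [/isZP -> | _]; first by rewrite evK0 mul0r.
by case: ifP => [/isZP -> | _]; first by rewrite evK0 mulr0.
Qed.
Lemma ev_oppS x : evK (oppS x) = - evK x.
Proof. by rewrite /oppS; case: ifP => [/isZP -> | _]; first by rewrite evK0 oppr0. Qed.

Definition esum (l : seq ex) := foldr addS Z l.
Lemma ev_esum (T : Type) (l : seq T) (f : T -> ex) :
  evK (esum (map f l)) = \sum_(x <- l) evK (f x).
Proof. by elim: l => [|x l IH]; rewrite ?big_nil ?big_cons //= ev_addS IH. Qed.

Definition shmn i j e := iter i shm (iter j shn e).
Lemma ev_shmn i j e : iter i sigm (iter j sign (evK e)) = evK (shmn i j e).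
Proof.
rewrite /shmn; have -> : iter j sign (evK e) = evK (iter j shn e).
  by elim: j => [|j IH] //=; rewrite IH ev_shn.
by elim: i => [|i IH] //=; rewrite IH ev_shm.
Qed.
Lemma shmnZ i j : shmn i j Z = Z.
Proof.
rewrite /shmn; have -> : iter j shn Z = Z by elim: j => //= j ->.
by elim: i => //= i ->.
Qed.

Definition emul (L1 L2 : mat) : mat :=
  mkseq (fun a => mkseq (fun b =>
     esum [seq esum [seq mulS (nth2 L1 i j) (shmn i j (nth2 L2 (a - i) (b - j)))
                    | j <- iota 0 b.+1] | i <- iota 0 a.+1])
    (width L1 + width L2).-1) (size L1 + size L2).-1.

Lemma nth2_mkseq (g : nat -> nat -> ex) H W a b :
  nth2 (mkseq (fun a => mkseq (g a) W) H) a b =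
  if (a < H)%N && (b < W)%N then g a b else Z.
Proof.
rewrite /nth2; case: (ltnP a H) => Ha /=.
  rewrite nth_mkseq //; case: (ltnP b W) => Hb; first by rewrite nth_mkseq.
  by rewrite nth_default ?size_mkseq.
by rewrite (nth_default [::]) ?size_mkseq ?nth_nil.
Qed.

Lemma sum_iota_ord (R : zmodType) n (F : nat -> R) : \sum_(x <- iota 0 n) F x = \sum_(i < n) F i.
Proof. by rewrite -(big_mkord xpredT) /index_iota subn0. Qed.

Lemma omul_ofe L1 L2 : omul (ofe L1) (ofe L2) = ofe (emul L1 L2).
Proof.
apply: functional_extensionality => a; apply: functional_extensionality => b.
rewrite /omul /ofe /emul nth2_mkseq.
case: ifP => [_|H].
  rewrite ev_esum sum_iota_ord.
  apply: eq_bigr => i _; rewrite ev_esum sum_iota_ord.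
  by apply: eq_bigr => j _; rewrite ev_mulS ev_shmn.
rewrite evK0; apply: big1 => i _; apply: big1 => j _.
have Hi := ltn_ord i; have Hj := ltn_ord j.
case: (boolP ((size L1 <= i)%N || (width L1 <= j)%N)) => [H1|].
  by rewrite nth2_out // evK0 mul0r.
rewrite negb_or -!ltnNge => /andP [H1 H2].
rewrite ev_shmn (nth2_out (L := L2)) ?shmnZ ?evK0 ?mulr0 //.
move: H; case: (ltnP a (size L1 + size L2).-1) => Ha; case: (ltnP b (width L1 + width L2).-1) => Hb //= _.
- apply/orP; right; move: Hb Hj (size_row_width L2 (a - i)); lia.
- apply/orP; left; move: Ha Hi H1; lia.
- apply/orP; left; move: Ha Hi H1; lia.
Qed.

Definition epw (f : ex -> ex -> ex) (L1 L2 : mat) : mat :=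
  mkseq (fun a => mkseq (fun b => f (nth2 L1 a b) (nth2 L2 a b))
     (maxn (width L1) (width L2))) (maxn (size L1) (size L2)).

Lemma ofe_epw f (op : K -> K -> K) L1 L2 :
  (forall x y, evK (f x y) = op (evK x) (evK y)) -> op 0 0 = 0 ->
  forall a b, evK (nth2 (epw f L1 L2) a b) = op (evK (nth2 L1 a b)) (evK (nth2 L2 a b)).
Proof.
move=> Hf H0 a b; rewrite nth2_mkseq; case: ifP => [_|H]; first exact: Hf.
move: H; case: (ltnP a (maxn (size L1) (size L2))) => Ha;
  case: (ltnP b (maxn (width L1) (width L2))) => Hb //= _.
- rewrite !nth2_out ?evK0 //; apply/orP; right; lia.
- rewrite !nth2_out ?evK0 //; apply/orP; left; lia.
- rewrite !nth2_out ?evK0 //; apply/orP; left; lia.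
Qed.

Definition eadd := epw addS.
Definition eopp L := epw (fun x _ => oppS x) L [::].
Definition ediff := epw (fun x y => addS x (oppS y)).

Lemma oadd_ofe L1 L2 : oadd (ofe L1) (ofe L2) = ofe (eadd L1 L2).
Proof.
apply: functional_extensionality => a; apply: functional_extensionality => b.
by rewrite /oadd /ofe (ofe_epw (op := +%R)) ?addr0 //; exact: ev_addS.
Qed.

Lemma oopp_ofe L : oopp (ofe L) = ofe (eopp L).
Proof.
apply: functional_extensionality => a; apply: functional_extensionality => b.
by rewrite /oopp /ofe (ofe_epw (op := fun x _ => - x)) ?oppr0 // => x y; exact: ev_oppS.
Qed.

Fixpoint allzr (r : seq ex) : Prop :=
  if r is d :: r' then (if isZ d then True else evK d = 0) /\ allzr r' else True.
Fixpoint allz2 (M : mat) : Prop :=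
  if M is r :: M' then allzr r /\ allz2 M' else True.

Lemma allzrP r : allzr r -> forall b, evK (nth Z r b) = 0.
Proof.
elim: r => [|d r IH] /= H b; first by rewrite nth_nil.
case: H => Hd Hr; case: b => [|b] /=; last exact: IH.
by move: Hd; case: ifP => [/isZP -> _|_ ->].
Qed.

Lemma allz2P M : allz2 M -> forall a b, evK (nth2 M a b) = 0.
Proof.
rewrite /nth2; elim: M => [|r M IH] /= H a b; first by rewrite !nth_nil.
case: H => Hr HM; case: a => [|a] /=; last exact: IH.
exact: allzrP.
Qed.

Lemma ofe_eq L1 L2 : allz2 (ediff L1 L2) -> ofe L1 = ofe L2.
Proof.
move=> H; apply: functional_extensionality => a; apply: functional_extensionality => b.
have := allz2P H a b; rewrite (ofe_epw (op := fun x y => x - y)) ?subrr //.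
  by move/eqP; rewrite subr_eq0 => /eqP.
by move=> x y; rewrite ev_addS ev_oppS.
Qed.

Lemma oc_ofe e : oc (evK e) = ofe [:: [:: e]].
Proof.
apply: functional_extensionality => i; apply: functional_extensionality => j.
by rewrite /oc /ofe /nth2; case: i => [|i]; case: j => [|j] //=; rewrite ?nth_nil ?evK0.
Qed.

Lemma oEm_ofe : oEm = ofe [:: [:: Z]; [:: O]].
Proof.
apply: functional_extensionality => i; apply: functional_extensionality => j.
by rewrite /oEm /ofe /nth2; case: i => [|[|i]]; case: j => [|j] //=; rewrite ?nth_nil ?evK0.
Qed.

Lemma oEn_ofe : oEn = ofe [:: [:: Z; O]].
Proof.
apply: functional_extensionality => i; apply: functional_extensionality => j.
by rewrite /oEn /ofe /nth2; case: i => [|i]; case: j => [|[|j]] //=; rewrite ?nth_nil ?evK0.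
Qed.

Fixpoint ispoly (e : ex) : bool :=
  match e with
  | Inv _ => false
  | Add x y | Mul x y => ispoly x && ispoly y
  | Opp x | Pw x _ => ispoly x
  | _ => true
  end.

Fixpoint ez (e : ex) : int :=
  match e with
  | Z => 0 | O => 1 | Nc n => n%:Z | Sv | Mv | Nv => 0
  | Add x y => ez x + ez y | Opp x => - ez x | Mul x y => ez x * ez y
  | Inv _ => 0 | Pw x n => ez x ^+ n
  | Mon neg c i j k => (if neg then - c%:Z else c%:Z) * (0 ^+ i * (0 ^+ j * 0 ^+ k))
  | Fac _ _ _ => 1
  end.

Fixpoint evP (e : ex) : Rpol :=
  match e with
  | Z => 0 | O => 1 | Nc n => n%:R | Sv => 'X_0 | Mv => 'X_1 | Nv => 'X_2
  | Add x y => evP x + evP y | Opp x => - evP x | Mul x y => evP x * evP y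
  | Inv _ => 0 | Pw x n => evP x ^+ n
  | Mon neg c i j k => (if neg then - c%:R else c%:R) * ('X_0 ^+ i * ('X_1 ^+ j * 'X_2 ^+ k))
  | Fac neg a v => if neg then 1 - 'X_0 ^+ a * (if v then 'X_2 else 'X_1) ^+ 2
                   else 1 + 'X_0 ^+ a * (if v then 'X_2 else 'X_1) ^+ 2
  end.

Lemma tofrac_nat n : tofrac (n%:R : Rpol) = n%:R. Proof. exact: rmorph_nat. Qed.

Lemma evK_evP e : ispoly e -> evK e = tofrac (evP e).
Proof.
rewrite /evK; elim: e => [|||||| x IHx y IHy | x IHx | x IHx y IHy | x IHx | x IHx n
   | neg c i j k | neg a [|]] //=.
all: try by rewrite ?tofrac0 ?tofrac1 ?tofrac_nat.
all: try by move=> /andP[px py]; rewrite ?tofracD ?tofracM IHx ?IHy.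
all: try by move=> px; rewrite ?tofracN ?tofracXn IHx.
all: try by case: neg; rewrite !tofracM ?tofracN !tofracXn tofrac_nat.
all: try by case: neg; rewrite ?tofracB ?tofracD tofrac1 tofracM !tofracXn.
all: by move=> n _; rewrite tofrac_nat.
Qed.

Lemma mevalXn (v : 'I_3 -> rat) (p : Rpol) n : meval v (p ^+ n) = (meval v p) ^+ n.
Proof. exact: rmorphXn. Qed.
Lemma intrXn (z : int) n : ((z ^+ n)%:~R : rat) = (z%:~R) ^+ n.
Proof. exact: rmorphXn. Qed.
Lemma meval_nat (v : 'I_3 -> rat) n : meval v (n%:R : Rpol) = n%:R.
Proof. exact: rmorph_nat. Qed.

Lemma meval_evP e : ispoly e -> meval (fun _ => (0 : rat)) (evP e) = (ez e)%:~R.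
Proof.
elim: e => [|| n ||| | x IHx y IHy | x IHx | x IHx y IHy | x IHx | x IHx n
   | neg c i j k | neg a v] //=.
- by rewrite meval0.
- by rewrite meval1.
- by rewrite meval_nat.
- by rewrite mevalXU.
- by rewrite mevalXU.
- by rewrite mevalXU.
- by move=> /andP[px py]; rewrite mevalD IHx ?IHy // intrD.
- by move=> px; rewrite mevalN IHx // intrN.
- by move=> /andP[px py]; rewrite mevalM IHx ?IHy // intrM.
- by move=> px; rewrite mevalXn IHx // intrXn.
- case: neg; rewrite !mevalM ?mevalN !mevalXn !mevalXU meval_nat !intrM ?intrN !intrXn /=;
  by rewrite ?mul0r ?mulr0.
- by case: neg; case: v; rewrite ?mevalB ?mevalD meval1 mevalM !mevalXn !mevalXU expr0n /= mulr0 ?subr0 ?addr0.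
Qed.

Record hypsF (F : fieldType) (s qm qn : F) : Prop := HypsF {
  hs : s != 0; hm : qm != 0; hn : qn != 0;
  hp : forall e, ispoly e -> ez e != 0 -> ev s qm qn e != 0 }.

Lemma hypsK : hypsF s_ Qm Qn.
Proof.
split; try exact: var_neq0.
move=> e pe ze; have := evK_evP pe; rewrite /evK => ->.
rewrite tofrac_eq0; apply/eqP => E; move: ze.
by rewrite -(intq_eq0) -meval_evP // E meval0 eqxx.
Qed.

Lemma transfer d :
  (forall (F : fieldType) (s qm qn : F), hypsF s qm qn -> ev s qm qn d = 0) -> evK d = 0.
Proof. by move=> H; apply: H; exact: hypsK. Qed.
Definition LYm : mat :=
  [:: [:: (Mul (Mon false 1 4 4 0) (Inv (Mul (Fac true 1 false) (Mul (Fac true 2 false) (Mul (Fac true 3 false) (Mul (Fac false 1 false) (Mul (Fac false 2 false) (Fac false 3 false))))))))];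
  [:: (Mul (Add (Mon true 1 3 2 0) (Add (Mon true 1 5 2 0) (Add (Mon true 1 9 6 0) (Mon true 1 11 6 0)))) (Inv (Mul (Fac true 1 false) (Mul (Fac true 3 false) (Mul (Fac true 5 false) (Mul (Fac false 1 false) (Mul (Fac false 3 false) (Fac false 5 false))))))))];
  [:: (Mul (Add (Mon false 1 2 0 0) (Add (Mon false 1 8 4 0) (Add (Mon false 1 10 4 0) (Add (Mon false 1 12 4 0) (Add (Mon true 1 16 8 0) (Add (Mon true 1 18 8 0) (Add (Mon true 1 20 8 0) (Mon true 1 26 12 0)))))))) (Inv (Mul (Fac true 2 false) (Mul (Fac true 3 false) (Mul (Fac true 5 false) (Mul (Fac true 6 false) (Mul (Fac false 2 false) (Mul (Fac false 3 false) (Mul (Fac false 5 false) (Fac false 6 false))))))))))];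
  [:: (Mul (Add (Mon true 1 7 2 0) (Add (Mon true 1 9 2 0) (Add (Mon true 1 17 6 0) (Mon true 1 19 6 0)))) (Inv (Mul (Fac true 3 false) (Mul (Fac true 5 false) (Mul (Fac true 7 false) (Mul (Fac false 3 false) (Mul (Fac false 5 false) (Fac false 7 false))))))))];
  [:: (Mul (Mon false 1 16 4 0) (Inv (Mul (Fac true 5 false) (Mul (Fac true 6 false) (Mul (Fac true 7 false) (Mul (Fac false 5 false) (Mul (Fac false 6 false) (Fac false 7 false))))))))]].

Definition LPYm : mat :=
  [:: [:: (Mul (Add (Mon false 1 4 4 0) (Mon true 1 10 6 0)) (Inv (Mul (Fac true 1 false) (Mul (Fac true 3 false) (Mul (Fac false 1 false) (Mul (Fac false 2 false) (Mul (Fac false 3 false) (Fac false 4 false))))))))];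
  [:: (Mul (Add (Mon true 1 3 2 0) (Add (Mon true 1 5 2 0) (Add (Mon false 1 5 4 0) (Add (Mon false 1 7 4 0) (Add (Mon false 1 9 4 0) (Add (Mon true 1 9 6 0) (Add (Mon true 1 11 6 0) (Add (Mon true 1 13 6 0) (Add (Mon false 1 13 8 0) (Mon false 1 15 8 0)))))))))) (Inv (Mul (Fac true 1 false) (Mul (Fac true 3 false) (Mul (Fac false 1 false) (Mul (Fac false 3 false) (Mul (Fac false 4 false) (Fac false 6 false))))))))];
  [:: (Mul (Add (Mon false 1 2 0 0) (Add (Mon true 2 6 2 0) (Add (Mon true 1 8 2 0) (Add (Mon false 2 10 4 0) (Add (Mon false 3 12 4 0) (Add (Mon false 1 14 4 0) (Add (Mon true 1 14 6 0) (Add (Mon true 3 16 6 0) (Add (Mon true 2 18 6 0) (Add (Mon false 1 20 8 0) (Add (Mon false 2 22 8 0) (Mon true 1 26 10 0)))))))))))) (Inv (Mul (Fac true 3 false) (Mul (Fac true 7 false) (Mul (Fac false 2 false) (Mul (Fac false 3 false) (Mul (Fac false 6 false) (Fac false 7 false))))))))];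
  [:: (Mul (Add (Mon false 1 3 0 0) (Add (Mon true 1 7 2 0) (Add (Mon true 2 9 2 0) (Add (Mon false 1 11 4 0) (Add (Mon false 3 13 4 0) (Add (Mon false 2 15 4 0) (Add (Mon true 2 17 6 0) (Add (Mon true 3 19 6 0) (Add (Mon true 1 21 6 0) (Add (Mon false 2 23 8 0) (Add (Mon false 1 25 8 0) (Mon true 1 29 10 0)))))))))))) (Inv (Mul (Fac true 3 false) (Mul (Fac true 7 false) (Mul (Fac false 3 false) (Mul (Fac false 4 false) (Mul (Fac false 7 false) (Fac false 8 false))))))))];
  [:: (Mul (Add (Mon true 1 10 2 0) (Add (Mon true 1 12 2 0) (Add (Mon false 1 16 4 0) (Add (Mon false 1 18 4 0) (Add (Mon false 1 20 4 0) (Add (Mon true 1 22 6 0) (Add (Mon true 1 24 6 0) (Add (Mon true 1 26 6 0) (Add (Mon false 1 30 8 0) (Mon false 1 32 8 0)))))))))) (Inv (Mul (Fac true 7 false) (Mul (Fac true 9 false) (Mul (Fac false 4 false) (Mul (Fac false 6 false) (Mul (Fac false 7 false) (Fac false 9 false))))))))];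
  [:: (Mul (Add (Mon false 1 21 4 0) (Mon true 1 25 6 0)) (Inv (Mul (Fac true 7 false) (Mul (Fac true 9 false) (Mul (Fac false 6 false) (Mul (Fac false 7 false) (Mul (Fac false 8 false) (Fac false 9 false))))))))]].

Definition LP0m : mat :=
  [:: [:: (Mul (Mon false 1 2 0 0) (Inv (Mul (Fac true 2 false) (Mul (Fac true 3 false) (Fac false 3 false)))))];
  [:: (Mul (Add (Mon true 1 0 0 2) (Add (Mon false 1 2 2 0) (Add (Mon false 1 2 2 4) (Add (Mon true 1 4 2 2) (Add (Mon true 1 4 4 2) (Add (Mon true 1 8 4 2) (Add (Mon true 1 12 6 0) (Add (Mon true 1 12 6 2) (Add (Mon true 1 12 6 4) (Mon false 1 14 8 2)))))))))) (Inv (Mul (Mon false 1 1 2 2) (Mul (Fac true 3 false) (Mul (Fac true 5 false) (Mul (Fac false 3 false) (Fac false 5 false)))))))];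
  [:: (Mul (Add (Mon true 1 0 0 0) (Add (Mon true 1 0 0 4) (Add (Mon false 1 2 2 0) (Add (Mon false 1 2 2 2) (Add (Mon false 1 2 2 4) (Add (Mon false 1 4 2 2) (Add (Mon true 1 4 4 2) (Add (Mon false 1 6 2 0) (Add (Mon false 1 6 2 2) (Add (Mon false 1 6 2 4) (Add (Mon true 2 6 4 2) (Add (Mon true 1 8 4 0) (Add (Mon true 2 8 4 2) (Add (Mon true 1 8 4 4) (Add (Mon true 1 10 4 2) (Add (Mon false 1 12 8 2) (Add (Mon false 2 14 8 2) (Add (Mon false 1 16 8 0) (Add (Mon false 2 16 8 2) (Add (Mon false 1 16 8 4) (Add (Mon false 1 18 8 2) (Add (Mon true 1 18 10 0) (Add (Mon true 1 18 10 2) (Add (Mon true 1 18 10 4) (Add (Mon true 1 20 10 2) (Add (Mon true 1 22 10 0) (Add (Mon true 1 22 10 2) (Add (Mon true 1 22 10 4) (Add (Mon false 1 24 12 0) (Mon false 1 24 12 4)))))))))))))))))))))))))))))) (Inv (Mul (Mon false 1 2 2 2) (Mul (Fac true 2 false) (Mul (Fac true 3 false) (Mul (Fac true 5 false) (Mul (Fac true 6 false) (Mul (Fac false 3 false) (Fac false 5 false)))))))))];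
  [:: (Mul (Add (Mon true 1 0 0 2) (Add (Mon false 1 6 2 0) (Add (Mon false 1 6 2 2) (Add (Mon false 1 6 2 4) (Add (Mon false 1 6 4 2) (Add (Mon false 1 10 4 2) (Add (Mon true 1 12 6 0) (Add (Mon true 1 12 6 4) (Add (Mon false 1 14 6 2) (Mon false 1 18 8 2)))))))))) (Inv (Mul (Mon false 1 3 2 2) (Mul (Fac true 3 false) (Mul (Fac true 5 false) (Mul (Fac false 3 false) (Fac false 5 false)))))))];
  [:: (Mul (Mon true 1 10 2 0) (Inv (Mul (Fac true 5 false) (Mul (Fac true 6 false) (Fac false 5 false)))))]].

Definition LAm : mat :=
  [:: [:: (Mul (Add (Mon false 1 2 0 0) (Mon true 1 8 2 0)) (Inv (Mul (Fac true 3 false) (Mul (Fac false 3 false) (Fac false 4 false)))))];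
  [:: (Mul (Add (Mon true 1 0 0 2) (Add (Mon false 1 2 2 0) (Add (Mon false 1 2 2 2) (Add (Mon false 1 2 2 4) (Add (Mon true 1 4 4 0) (Add (Mon true 1 4 4 2) (Add (Mon true 1 4 4 4) (Add (Mon false 1 6 4 2) (Add (Mon false 1 6 6 2) (Add (Mon true 1 10 4 2) (Add (Mon true 1 14 6 0) (Add (Mon true 1 14 6 2) (Add (Mon true 1 14 6 4) (Add (Mon false 1 16 8 0) (Add (Mon false 2 16 8 2) (Add (Mon false 1 16 8 4) (Mon true 1 18 10 2))))))))))))))))) (Inv (Mul (Mon false 1 1 2 2) (Mul (Fac true 3 false) (Mul (Fac false 3 false) (Mul (Fac false 4 false) (Fac false 6 false)))))))];
  [:: (Mul (Add (Mon true 1 0 0 0) (Add (Mon true 1 0 0 2) (Add (Mon true 1 0 0 4) (Add (Mon false 1 2 2 0) (Add (Mon false 1 2 2 2) (Add (Mon false 1 2 2 4) (Add (Mon false 2 4 2 0) (Add (Mon false 2 4 2 2) (Add (Mon false 2 4 2 4) (Add (Mon true 1 4 4 2) (Add (Mon true 1 6 4 0) (Add (Mon true 2 6 4 2) (Add (Mon true 1 6 4 4) (Add (Mon false 1 8 2 2) (Add (Mon true 2 8 4 0) (Add (Mon true 3 8 4 2) (Add (Mon true 2 8 4 4) (Add (Mon false 1 8 6 2) (Add (Mon true 1 10 4 0) (Add (Mon true 1 10 4 2) (Add (Mon true 1 10 4 4) (Add (Mon false 1 10 6 2) (Add (Mon true 1 12 4 2) (Add (Mon false 2 12 6 0) (Add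 (Mon false 3 12 6 2) (Add (Mon false 2 12 6 4) (Add (Mon false 1 14 4 0) (Add (Mon false 1 14 4 2) (Add (Mon false 1 14 4 4) (Add (Mon false 1 14 6 0) (Add (Mon false 1 14 6 4) (Add (Mon true 1 16 6 0) (Add (Mon true 1 16 6 2) (Add (Mon true 1 16 6 4) (Add (Mon true 1 16 8 0) (Add (Mon true 1 16 8 2) (Add (Mon true 1 16 8 4) (Add (Mon true 2 18 6 0) (Add (Mon true 2 18 6 2) (Add (Mon true 2 18 6 4) (Add (Mon false 2 18 8 2) (Add (Mon false 1 20 8 0) (Add (Mon false 2 20 8 2) (Add (Mon false 1 20 8 4) (Add (Mon false 2 22 8 0) (Add (Mon false 3 22 8 2) (Add (Mon false 2 22 8 4) (Add (Mon true 1 22 10 2) (Add (Mon false 1 24 8 0) (Add (Mon false 1 24 8 2) (Add (Mon false 1 24 8 4) (Add (Mon true 1 24 10 2) (Add (Mon true 2 26 10 0) (Add (Mon true 3 26 10 2) (Add (Mon true 2 26 10 4) (Add (Mon true 1 28 10 0) (Add (Mon true 1 28 10 2) (Add (Mon true 1 28 10 4) (Add (Mon false 1 30 12 0) (Add (Mon false 1 30 12 2) (Mon false 1 30 12 4))))))))))))))))))))))))))))))))))))))))))))))))))))))))))))) (Inv (Mul (Mon false 1 2 2 2) (Mul (Fac true 3 false) (Mul (Fac true 7 false) (Mul (Fac false 3 false) (Mul (Fac false 6 false) (Fac false 7 false))))))))];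
  [:: (Mul (Add (Mon true 1 0 0 0) (Add (Mon true 1 0 0 2) (Add (Mon true 1 0 0 4) (Add (Mon false 1 2 2 2) (Add (Mon false 1 4 2 2) (Add (Mon false 2 6 2 0) (Add (Mon false 3 6 2 2) (Add (Mon false 2 6 2 4) (Add (Mon false 1 6 4 0) (Add (Mon false 1 6 4 2) (Add (Mon false 1 6 4 4) (Add (Mon false 1 8 2 0) (Add (Mon false 1 8 2 2) (Add (Mon false 1 8 2 4) (Add (Mon true 2 8 4 2) (Add (Mon true 1 8 6 2) (Add (Mon true 1 10 4 0) (Add (Mon true 2 10 4 2) (Add (Mon true 1 10 4 4) (Add (Mon true 1 10 6 2) (Add (Mon true 2 12 4 0) (Add (Mon true 3 12 4 2) (Add (Mon true 2 12 4 4) (Add (Mon true 2 12 6 0) (Add (Mon true 3 12 6 2) (Add (Mon true 2 12 6 4) (Add (Mon true 1 14 4 0) (Add (Mon true 1 14 4 2) (Add (Mon true 1 14 4 4) (Add (Mon true 1 14 6 0) (Add (Mon true 1 14 6 4) (Add (Mon false 1 14 8 2) (Add (Mon false 1 16 6 0) (Add (Mon false 1 16 6 2) (Add (Mon false 1 16 6 4) (Add (Mon false 1 16 8 0) (Add (Mon false 2 16 8 2) (Add (Mon false 1 16 8 4) (Add (Mon false 2 18 6 0) (Add (Mon false 2 18 6 2) (Add (Mon false 2 18 6 4) (Add (Mon false 2 18 8 0) (Add (Mon false 3 18 8 2) (Add (Mon false 2 18 8 4) (Add (Mon false 1 20 8 0) (Add (Mon false 1 20 8 2) (Add (Mon false 1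 20 8 4) (Add (Mon false 1 22 8 2) (Add (Mon true 1 22 10 0) (Add (Mon true 1 22 10 2) (Add (Mon true 1 22 10 4) (Add (Mon true 1 24 8 0) (Add (Mon true 1 24 8 2) (Add (Mon true 1 24 8 4) (Add (Mon true 2 24 10 0) (Add (Mon true 2 24 10 2) (Add (Mon true 2 24 10 4) (Add (Mon true 1 28 10 2) (Add (Mon false 1 30 12 0) (Add (Mon false 1 30 12 2) (Mon false 1 30 12 4))))))))))))))))))))))))))))))))))))))))))))))))))))))))))))) (Inv (Mul (Mon false 1 3 2 2) (Mul (Fac true 3 false) (Mul (Fac true 7 false) (Mul (Fac false 3 false) (Mul (Fac false 4 false) (Fac false 7 false))))))))];
  [:: (Mul (Add (Mon true 1 0 0 2) (Add (Mon false 1 8 2 0) (Add (Mon false 2 8 2 2) (Add (Mon false 1 8 2 4) (Add (Mon false 1 8 4 2) (Add (Mon true 1 16 4 0) (Add (Mon true 1 16 4 2) (Add (Mon true 1 16 4 4) (Add (Mon true 1 16 6 0) (Add (Mon true 1 16 6 2) (Add (Mon true 1 16 6 4) (Add (Mon false 1 18 6 2) (Add (Mon true 1 22 6 2) (Add (Mon false 1 24 8 0) (Add (Mon false 1 24 8 2) (Add (Mon false 1 24 8 4) (Mon true 1 32 10 2))))))))))))))))) (Inv (Mul (Mon false 1 4 2 2) (Mul (Fac true 7 false) (Mul (Fac false 4 false) (Mul (Fac false 6 false) (Fac false 7 false)))))))];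
  [:: (Mul (Add (Mon true 1 13 2 0) (Mon false 1 17 4 0)) (Inv (Mul (Fac true 7 false) (Mul (Fac false 6 false) (Fac false 7 false)))))]].

Definition LYn : mat :=
  [:: [:: (Mul (Mon false 1 4 0 4) (Inv (Mul (Fac true 1 true) (Mul (Fac true 2 true) (Mul (Fac true 3 true) (Mul (Fac false 1 true) (Mul (Fac false 2 true) (Fac false 3 true)))))))); (Mul (Add (Mon true 1 3 0 2) (Add (Mon true 1 5 0 2) (Add (Mon true 1 9 0 6) (Mon true 1 11 0 6)))) (Inv (Mul (Fac true 1 true) (Mul (Fac true 3 true) (Mul (Fac true 5 true) (Mul (Fac false 1 true) (Mul (Fac false 3 true) (Fac false 5 true)))))))); (Mul (Add (Mon false 1 2 0 0) (Add (Mon false 1 8 0 4) (Add (Mon false 1 10 0 4) (Add (Mon false 1 12 0 4) (Add (Mon true 1 16 0 8) (Add (Mon true 1 18 0 8) (Add (Mon true 1 20 0 8) (Mon true 1 26 0 12)))))))) (Inv (Mul (Fac true 2 true) (Mul (Fac true 3 true) (Mul (Fac true 5 true) (Mul (Fac true 6 true) (Mul (Fac false 2 true) (Mul (Fac false 3 true) (Mul (Fac false 5 true) (Fac false 6 true)))))))))); (Mul (Add (Mon true 1 7 0 2) (Add (Mon true 1 9 0 2) (Add (Mon true 1 17 0 6) (Mon true 1 19 0 6)))) (Inv (Mul (Fac true 3 true) (Mul (Fac true 5 true) (Mul (Fac true 7 true) (Mul (Fac false 3 true) (Mul (Fac false 5 true) (Fac false 7 true)))))))); (Mul (Mon false 1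 16 0 4) (Inv (Mul (Fac true 5 true) (Mul (Fac true 6 true) (Mul (Fac true 7 true) (Mul (Fac false 5 true) (Mul (Fac false 6 true) (Fac false 7 true))))))))]].

Definition LPYn : mat :=
  [:: [:: (Mul (Add (Mon false 1 4 0 4) (Mon true 1 10 0 6)) (Inv (Mul (Fac true 1 true) (Mul (Fac true 3 true) (Mul (Fac false 1 true) (Mul (Fac false 2 true) (Mul (Fac false 3 true) (Fac false 4 true)))))))); (Mul (Add (Mon true 1 3 0 2) (Add (Mon true 1 5 0 2) (Add (Mon false 1 5 0 4) (Add (Mon false 1 7 0 4) (Add (Mon false 1 9 0 4) (Add (Mon true 1 9 0 6) (Add (Mon true 1 11 0 6) (Add (Mon true 1 13 0 6) (Add (Mon false 1 13 0 8) (Mon false 1 15 0 8)))))))))) (Inv (Mul (Fac true 1 true) (Mul (Fac true 3 true) (Mul (Fac false 1 true) (Mul (Fac false 3 true) (Mul (Fac false 4 true) (Fac false 6 true)))))))); (Mul (Add (Mon false 1 2 0 0) (Add (Mon true 2 6 0 2) (Add (Mon true 1 8 0 2) (Add (Mon false 2 10 0 4) (Add (Mon false 3 12 0 4) (Add (Mon false 1 14 0 4) (Add (Mon true 1 14 0 6) (Add (Mon true 3 16 0 6) (Add (Mon true 2 18 0 6) (Add (Mon false 1 20 0 8) (Add (Mon false 2 22 0 8) (Mon true 1 26 0 10)))))))))))) (Inv (Mul (Fac true 3 true) (Mul (Fac true 7 true) (Mul (Fac false 2 true) (Mul (Fac false 3 true) (Mul (Fac false 6 true) (Fac false 7 true))))))));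 (Mul (Add (Mon false 1 3 0 0) (Add (Mon true 1 7 0 2) (Add (Mon true 2 9 0 2) (Add (Mon false 1 11 0 4) (Add (Mon false 3 13 0 4) (Add (Mon false 2 15 0 4) (Add (Mon true 2 17 0 6) (Add (Mon true 3 19 0 6) (Add (Mon true 1 21 0 6) (Add (Mon false 2 23 0 8) (Add (Mon false 1 25 0 8) (Mon true 1 29 0 10)))))))))))) (Inv (Mul (Fac true 3 true) (Mul (Fac true 7 true) (Mul (Fac false 3 true) (Mul (Fac false 4 true) (Mul (Fac false 7 true) (Fac false 8 true)))))))); (Mul (Add (Mon true 1 10 0 2) (Add (Mon true 1 12 0 2) (Add (Mon false 1 16 0 4) (Add (Mon false 1 18 0 4) (Add (Mon false 1 20 0 4) (Add (Mon true 1 22 0 6) (Add (Mon true 1 24 0 6) (Add (Mon true 1 26 0 6) (Add (Mon false 1 30 0 8) (Mon false 1 32 0 8)))))))))) (Inv (Mul (Fac true 7 true) (Mul (Fac true 9 true) (Mul (Fac false 4 true) (Mul (Fac false 6 true) (Mul (Fac false 7 true) (Fac false 9 true)))))))); (Mul (Add (Mon false 1 21 0 4) (Mon true 1 25 0 6)) (Inv (Mul (Fac true 7 true) (Mul (Fac true 9 true) (Mul (Fac false 6 true) (Mul (Fac false 7 true) (Mul (Fac false 8 true) (Fac false 9 true))))))))]].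

Definition LP0n : mat :=
  [:: [:: (Mul (Mon false 1 2 0 0) (Inv (Mul (Fac true 2 true) (Mul (Fac true 3 true) (Fac false 3 true))))); (Mul (Add (Mon true 1 0 2 0) (Add (Mon false 1 2 0 2) (Add (Mon false 1 2 4 2) (Add (Mon true 1 4 2 2) (Add (Mon true 1 4 2 4) (Add (Mon true 1 8 2 4) (Add (Mon true 1 12 0 6) (Add (Mon true 1 12 2 6) (Add (Mon true 1 12 4 6) (Mon false 1 14 2 8)))))))))) (Inv (Mul (Mon false 1 1 2 2) (Mul (Fac true 3 true) (Mul (Fac true 5 true) (Mul (Fac false 3 true) (Fac false 5 true))))))); (Mul (Add (Mon true 1 0 0 0) (Add (Mon true 1 0 4 0) (Add (Mon false 1 2 0 2) (Add (Mon false 1 2 2 2) (Add (Mon false 1 2 4 2) (Add (Mon false 1 4 2 2) (Add (Mon true 1 4 2 4) (Add (Mon false 1 6 0 2) (Add (Mon false 1 6 2 2) (Add (Mon true 2 6 2 4) (Add (Mon false 1 6 4 2) (Add (Mon true 1 8 0 4) (Add (Mon true 2 8 2 4) (Add (Mon true 1 8 4 4) (Add (Mon true 1 10 2 4) (Add (Mon false 1 12 2 8) (Add (Mon false 2 14 2 8) (Add (Mon false 1 16 0 8) (Add (Mon false 2 16 2 8) (Add (Mon false 1 16 4 8) (Add (Mon true 1 18 0 10) (Add (Mon false 1 18 2 8) (Add (Mon true 1 18 2 10) (Add (Mon true 1 18 4 10) (Add (Mon true 1 20 2 10) (Add (Mon true 1 22 0 10) (Add (Mon true 1 22 2 10) (Add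 (Mon true 1 22 4 10) (Add (Mon false 1 24 0 12) (Mon false 1 24 4 12)))))))))))))))))))))))))))))) (Inv (Mul (Mon false 1 2 2 2) (Mul (Fac true 2 true) (Mul (Fac true 3 true) (Mul (Fac true 5 true) (Mul (Fac true 6 true) (Mul (Fac false 3 true) (Fac false 5 true))))))))); (Mul (Add (Mon true 1 0 2 0) (Add (Mon false 1 6 0 2) (Add (Mon false 1 6 2 2) (Add (Mon false 1 6 2 4) (Add (Mon false 1 6 4 2) (Add (Mon false 1 10 2 4) (Add (Mon true 1 12 0 6) (Add (Mon true 1 12 4 6) (Add (Mon false 1 14 2 6) (Mon false 1 18 2 8)))))))))) (Inv (Mul (Mon false 1 3 2 2) (Mul (Fac true 3 true) (Mul (Fac true 5 true) (Mul (Fac false 3 true) (Fac false 5 true))))))); (Mul (Mon true 1 10 0 2) (Inv (Mul (Fac true 5 true) (Mul (Fac true 6 true) (Fac false 5 true)))))]].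

Definition LAn : mat :=
  [:: [:: (Mul (Add (Mon false 1 2 0 0) (Mon true 1 8 0 2)) (Inv (Mul (Fac true 3 true) (Mul (Fac false 3 true) (Fac false 4 true))))); (Mul (Add (Mon true 1 0 2 0) (Add (Mon false 1 2 0 2) (Add (Mon false 1 2 2 2) (Add (Mon false 1 2 4 2) (Add (Mon true 1 4 0 4) (Add (Mon true 1 4 2 4) (Add (Mon true 1 4 4 4) (Add (Mon false 1 6 2 4) (Add (Mon false 1 6 2 6) (Add (Mon true 1 10 2 4) (Add (Mon true 1 14 0 6) (Add (Mon true 1 14 2 6) (Add (Mon true 1 14 4 6) (Add (Mon false 1 16 0 8) (Add (Mon false 2 16 2 8) (Add (Mon false 1 16 4 8) (Mon true 1 18 2 10))))))))))))))))) (Inv (Mul (Mon false 1 1 2 2) (Mul (Fac true 3 true) (Mul (Fac false 3 true) (Mul (Fac false 4 true) (Fac false 6 true))))))); (Mul (Add (Mon true 1 0 0 0) (Add (Mon true 1 0 2 0) (Add (Mon true 1 0 4 0) (Add (Mon false 1 2 0 2) (Add (Mon false 1 2 2 2) (Add (Mon false 1 2 4 2) (Add (Mon false 2 4 0 2) (Add (Mon false 2 4 2 2) (Add (Mon true 1 4 2 4) (Add (Mon false 2 4 4 2) (Add (Mon true 1 6 0 4) (Add (Mon true 2 6 2 4) (Add (Mon true 1 6 4 4) (Add (Mon true 2 8 0 4) (Add (Mon false 1 8 2 2) (Add (Mon true 3 8 2 4) (Add (Mon false 1 8 2 6) (Add (Mon true 2 8 4 4) (Add (Mon true 1 10 0 4)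 (Add (Mon true 1 10 2 4) (Add (Mon false 1 10 2 6) (Add (Mon true 1 10 4 4) (Add (Mon false 2 12 0 6) (Add (Mon true 1 12 2 4) (Add (Mon false 3 12 2 6) (Add (Mon false 2 12 4 6) (Add (Mon false 1 14 0 4) (Add (Mon false 1 14 0 6) (Add (Mon false 1 14 2 4) (Add (Mon false 1 14 4 4) (Add (Mon false 1 14 4 6) (Add (Mon true 1 16 0 6) (Add (Mon true 1 16 0 8) (Add (Mon true 1 16 2 6) (Add (Mon true 1 16 2 8) (Add (Mon true 1 16 4 6) (Add (Mon true 1 16 4 8) (Add (Mon true 2 18 0 6) (Add (Mon true 2 18 2 6) (Add (Mon false 2 18 2 8) (Add (Mon true 2 18 4 6) (Add (Mon false 1 20 0 8) (Add (Mon false 2 20 2 8) (Add (Mon false 1 20 4 8) (Add (Mon false 2 22 0 8) (Add (Mon false 3 22 2 8) (Add (Mon true 1 22 2 10) (Add (Mon false 2 22 4 8) (Add (Mon false 1 24 0 8) (Add (Mon false 1 24 2 8) (Add (Mon true 1 24 2 10) (Add (Mon false 1 24 4 8) (Add (Mon true 2 26 0 10) (Add (Mon true 3 26 2 10) (Add (Mon true 2 26 4 10) (Add (Mon true 1 28 0 10) (Add (Mon true 1 28 2 10) (Add (Mon true 1 28 4 10) (Add (Mon false 1 30 0 12) (Add (Mon false 1 30 2 12) (Mon false 1 30 4 12))))))))))))))))))))))))))))))))))))))))))))))))))))))))))))) (Inv (Mul (Mon false 1 2 2 2) (Mul (Fac true 3 true) (Mul (Fac true 7 true) (Mul (Fac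 false 3 true) (Mul (Fac false 6 true) (Fac false 7 true)))))))); (Mul (Add (Mon true 1 0 0 0) (Add (Mon true 1 0 2 0) (Add (Mon true 1 0 4 0) (Add (Mon false 1 2 2 2) (Add (Mon false 1 4 2 2) (Add (Mon false 2 6 0 2) (Add (Mon false 1 6 0 4) (Add (Mon false 3 6 2 2) (Add (Mon false 1 6 2 4) (Add (Mon false 2 6 4 2) (Add (Mon false 1 6 4 4) (Add (Mon false 1 8 0 2) (Add (Mon false 1 8 2 2) (Add (Mon true 2 8 2 4) (Add (Mon true 1 8 2 6) (Add (Mon false 1 8 4 2) (Add (Mon true 1 10 0 4) (Add (Mon true 2 10 2 4) (Add (Mon true 1 10 2 6) (Add (Mon true 1 10 4 4) (Add (Mon true 2 12 0 4) (Add (Mon true 2 12 0 6) (Add (Mon true 3 12 2 4) (Add (Mon true 3 12 2 6) (Add (Mon true 2 12 4 4) (Add (Mon true 2 12 4 6) (Add (Mon true 1 14 0 4) (Add (Mon true 1 14 0 6) (Add (Mon true 1 14 2 4) (Add (Mon false 1 14 2 8) (Add (Mon true 1 14 4 4) (Add (Mon true 1 14 4 6) (Add (Mon false 1 16 0 6) (Add (Mon false 1 16 0 8) (Add (Mon false 1 16 2 6) (Add (Mon false 2 16 2 8) (Add (Mon false 1 16 4 6) (Add (Mon false 1 16 4 8) (Add (Mon false 2 18 0 6) (Add (Mon false 2 18 0 8) (Add (Mon false 2 18 2 6) (Add (Mon false 3 18 2 8) (Add (Mon false 2 18 4 6) (Add (Mon false 2 18 4 8) (Add (Mon false 1 20 0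 8) (Add (Mon false 1 20 2 8) (Add (Mon false 1 20 4 8) (Add (Mon true 1 22 0 10) (Add (Mon false 1 22 2 8) (Add (Mon true 1 22 2 10) (Add (Mon true 1 22 4 10) (Add (Mon true 1 24 0 8) (Add (Mon true 2 24 0 10) (Add (Mon true 1 24 2 8) (Add (Mon true 2 24 2 10) (Add (Mon true 1 24 4 8) (Add (Mon true 2 24 4 10) (Add (Mon true 1 28 2 10) (Add (Mon false 1 30 0 12) (Add (Mon false 1 30 2 12) (Mon false 1 30 4 12))))))))))))))))))))))))))))))))))))))))))))))))))))))))))))) (Inv (Mul (Mon false 1 3 2 2) (Mul (Fac true 3 true) (Mul (Fac true 7 true) (Mul (Fac false 3 true) (Mul (Fac false 4 true) (Fac false 7 true)))))))); (Mul (Add (Mon true 1 0 2 0) (Add (Mon false 1 8 0 2) (Add (Mon false 2 8 2 2) (Add (Mon false 1 8 2 4) (Add (Mon false 1 8 4 2) (Add (Mon true 1 16 0 4) (Add (Mon true 1 16 0 6) (Add (Mon true 1 16 2 4) (Add (Mon true 1 16 2 6) (Add (Mon true 1 16 4 4) (Add (Mon true 1 16 4 6) (Add (Mon false 1 18 2 6) (Add (Mon true 1 22 2 6) (Add (Mon false 1 24 0 8) (Add (Mon false 1 24 2 8) (Add (Mon false 1 24 4 8) (Mon true 1 32 2 10))))))))))))))))) (Inv (Mul (Mon false 1 4 2 2) (Mul (Fac true 7 true) (Mul (Fac false 4 true) (Mul (Fac false 6 true) (Fac false 7 true))))))); (Mul (Add (Mon true 1 13 0 2) (Mon false 1 17 0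 4)) (Inv (Mul (Fac true 7 true) (Mul (Fac false 6 true) (Fac false 7 true)))))]].

Definition LC : mat :=
  [:: [:: (Mul (Add (Mon false 1 5 0 2) (Add (Mon false 1 5 2 0) (Add (Mon false 1 7 2 2) (Add (Mon false 1 9 4 4) (Add (Mon true 1 11 0 4) (Add (Mon true 2 11 2 2) (Add (Mon true 1 11 4 0) (Add (Mon true 1 13 2 4) (Add (Mon true 1 13 4 2) (Add (Mon true 1 15 4 6) (Add (Mon true 1 15 6 4) (Add (Mon false 1 17 2 4) (Add (Mon false 1 17 4 2) (Add (Mon false 1 19 4 4) (Mon false 1 21 6 6))))))))))))))) (Inv (Mul (Fac true 1 false) (Mul (Fac true 1 true) (Mul (Fac true 3 false) (Mul (Fac true 3 true) (Mul (Fac false 1 false) (Mul (Fac false 1 true) (Mul (Fac false 2 false) (Mul (Fac false 2 true) (Mul (Fac false 3 false) (Mul (Fac false 3 true) (Mul (Fac false 4 false) (Fac false 4 true)))))))))))))); (Mul (Add (Mon true 1 2 2 0) (Add (Mon true 1 4 0 2) (Add (Mon false 1 4 4 2) (Add (Mon false 1 6 2 4) (Add (Mon false 1 8 0 4) (Add (Mon false 1 8 4 0) (Add (Mon true 1 8 4 4) (Add (Mon true 1 8 4 6) (Add (Mon false 1 10 2 2) (Add (Mon true 1 10 4 4) (Add (Mon true 1 10 6 2) (Add (Mon true 1 12 0 6) (Add (Mon true 1 12 2 4) (Add (Mon true 1 12 4 4) (Add (Mon true 1 14 0 6) (Add (Mon true 1 14 2 4) (Add (Mon true 1 14 2 6)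 (Add (Mon false 1 14 4 6) (Add (Mon false 1 14 6 4) (Add (Mon false 1 14 6 6) (Add (Mon true 1 16 2 6) (Add (Mon true 1 16 4 6) (Add (Mon false 1 16 6 4) (Add (Mon false 1 18 2 6) (Add (Mon true 1 18 2 8) (Add (Mon false 1 18 4 4) (Add (Mon true 1 18 4 8) (Add (Mon false 1 20 2 6) (Add (Mon false 1 20 4 6) (Add (Mon false 1 20 4 10) (Add (Mon true 1 20 6 6) (Add (Mon false 1 22 4 6) (Add (Mon false 1 22 6 6) (Add (Mon false 1 24 4 8) (Add (Mon false 1 24 6 8) (Mon true 1 26 6 10)))))))))))))))))))))))))))))))))))) (Inv (Mul (Mon false 1 0 0 2) (Mul (Fac true 1 false) (Mul (Fac true 3 false) (Mul (Fac true 3 true) (Mul (Fac false 1 false) (Mul (Fac false 2 false) (Mul (Fac false 2 true) (Mul (Fac false 3 false) (Mul (Fac false 3 true) (Mul (Fac false 4 false) (Mul (Fac false 4 true) (Fac false 6 true)))))))))))))); (Mul (Add (Mon true 1 1 2 0) (Add (Mon true 1 1 4 0) (Add (Mon false 1 3 4 2) (Add (Mon true 1 5 0 2) (Add (Mon false 1 5 4 2) (Add (Mon false 1 7 2 4) (Add (Mon false 1 7 4 0) (Add (Mon false 1 7 4 2) (Add (Mon false 1 7 4 4) (Add (Mon false 1 7 6 0) (Add (Mon false 1 9 0 4) (Add (Mon false 1 9 2 2) (Add (Mon true 1 9 4 4) (Add (Mon true 1 9 4 6) (Add (Mon true 1 9 6 2) (Add (Mon false 1 11 0 4) (Add (Mon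 false 1 11 2 2) (Add (Mon true 1 11 2 4) (Add (Mon true 2 11 4 4) (Add (Mon true 1 11 4 6) (Add (Mon true 1 11 6 2) (Add (Mon false 1 13 0 4) (Add (Mon true 1 13 0 6) (Add (Mon true 1 13 2 6) (Add (Mon true 2 13 4 4) (Add (Mon true 1 13 6 2) (Add (Mon true 1 13 6 4) (Add (Mon true 2 15 0 6) (Add (Mon true 1 15 2 6) (Add (Mon true 1 15 4 2) (Add (Mon false 1 15 4 4) (Add (Mon false 1 15 4 6) (Add (Mon false 1 15 6 4) (Add (Mon false 1 15 6 6) (Add (Mon true 1 17 0 6) (Add (Mon true 1 17 2 4) (Add (Mon true 1 17 2 6) (Add (Mon false 1 17 2 8) (Add (Mon false 1 17 4 4) (Add (Mon false 1 17 4 6) (Add (Mon false 1 17 4 8) (Add (Mon false 2 17 6 4) (Add (Mon false 1 17 6 6) (Add (Mon false 1 19 0 8) (Add (Mon true 1 19 2 4) (Add (Mon false 2 19 2 6) (Add (Mon false 1 19 4 6) (Add (Mon true 1 19 4 8) (Add (Mon false 1 19 6 4) (Add (Mon false 1 21 0 8) (Add (Mon false 2 21 2 6) (Add (Mon true 1 21 2 8) (Add (Mon true 1 21 4 4) (Add (Mon false 1 21 4 6) (Add (Mon true 2 21 4 8) (Add (Mon true 1 21 6 4) (Add (Mon true 1 21 6 6) (Add (Mon false 1 23 0 8) (Add (Mon false 1 23 2 6) (Add (Mon false 1 23 4 6) (Add (Mon true 2 23 4 8) (Add (Mon false 1 23 4 10) (Add (Mon true 1 23 6 6) (Add (Mon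 true 1 23 6 8) (Add (Mon true 1 25 0 10) (Add (Mon true 1 25 4 6) (Add (Mon false 1 25 4 8) (Add (Mon false 1 25 4 10) (Add (Mon false 1 25 6 8) (Add (Mon true 1 27 2 8) (Add (Mon false 1 27 4 8) (Add (Mon false 1 27 4 10) (Add (Mon false 2 27 6 8) (Add (Mon true 1 29 2 8) (Add (Mon false 1 29 2 10) (Add (Mon false 1 29 6 8) (Add (Mon true 1 29 6 10) (Add (Mon false 1 31 2 10) (Add (Mon true 1 31 2 12) (Add (Mon true 1 31 4 8) (Add (Mon true 1 31 4 12) (Add (Mon true 1 31 6 8) (Add (Mon true 1 31 6 10) (Add (Mon true 1 33 6 10) (Add (Mon true 1 35 4 10) (Add (Mon false 1 37 4 12) (Mon false 1 37 6 12))))))))))))))))))))))))))))))))))))))))))))))))))))))))))))))))))))))))))))))))))))))) (Inv (Mul (Mon false 1 0 0 2) (Mul (Fac true 1 false) (Mul (Fac true 3 false) (Mul (Fac true 3 true) (Mul (Fac true 7 true) (Mul (Fac false 1 false) (Mul (Fac false 2 false) (Mul (Fac false 3 false) (Mul (Fac false 3 true) (Mul (Fac false 4 false) (Mul (Fac false 4 true) (Mul (Fac false 6 true) (Fac false 7 true))))))))))))))); (Mul (Add (Mon true 1 0 4 0) (Add (Mon false 1 6 6 0) (Add (Mon false 1 8 2 2) (Add (Mon false 1 8 4 2) (Add (Mon false 1 8 4 4) (Add (Mon false 1 12 0 4) (Add (Mon false 1 14 0 4) (Add (Mon false 1 14 2 4) (Add (Mon true 1 14 4 2) (Add (Mon true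 1 14 4 4) (Add (Mon true 1 14 6 2) (Add (Mon true 1 14 6 4) (Add (Mon false 1 16 2 4) (Add (Mon true 1 16 2 6) (Add (Mon false 1 16 4 4) (Add (Mon true 1 18 0 6) (Add (Mon true 1 18 2 4) (Add (Mon false 1 18 4 6) (Add (Mon true 1 20 2 4) (Add (Mon true 1 20 4 4) (Add (Mon false 1 20 4 6) (Add (Mon false 1 20 6 4) (Add (Mon false 1 22 2 6) (Add (Mon true 1 22 4 4) (Add (Mon false 1 22 4 6) (Add (Mon true 1 22 6 4) (Add (Mon false 1 24 0 8) (Add (Mon false 1 24 2 6) (Add (Mon true 1 24 4 8) (Add (Mon true 1 24 6 6) (Add (Mon true 1 26 6 6) (Add (Mon true 1 28 4 6) (Add (Mon true 1 30 2 8) (Add (Mon false 1 30 6 8) (Add (Mon false 1 32 2 10) (Mon true 1 38 4 10)))))))))))))))))))))))))))))))))))) (Inv (Mul (Mon false 1 0 0 2) (Mul (Fac true 1 false) (Mul (Fac true 3 false) (Mul (Fac true 7 true) (Mul (Fac false 1 false) (Mul (Fac false 2 false) (Mul (Fac false 3 false) (Mul (Fac false 4 false) (Mul (Fac false 4 true) (Mul (Fac false 6 true) (Mul (Fac false 7 true) (Fac false 8 true)))))))))))))); (Mul (Add (Mon true 1 17 4 2) (Add (Mon false 1 21 4 4) (Add (Mon true 1 23 0 4) (Add (Mon false 1 23 6 2) (Add (Mon true 1 25 2 4) (Add (Mon false 1 27 0 6) (Add (Mon true 1 27 6 4) (Add (Mon false 1 29 2 4) (Add (Mon false 1 29 2 6)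 (Add (Mon false 1 31 4 4) (Add (Mon true 2 33 2 6) (Add (Mon true 1 35 4 6) (Add (Mon false 1 37 2 8) (Add (Mon false 1 39 4 6) (Mon true 1 43 4 8))))))))))))))) (Inv (Mul (Fac true 1 false) (Mul (Fac true 3 false) (Mul (Fac true 7 true) (Mul (Fac true 9 true) (Mul (Fac false 1 false) (Mul (Fac false 2 false) (Mul (Fac false 3 false) (Mul (Fac false 4 false) (Mul (Fac false 6 true) (Mul (Fac false 7 true) (Mul (Fac false 8 true) (Fac false 9 true))))))))))))))];
  [:: (Mul (Add (Mon true 1 2 0 2) (Add (Mon true 1 4 2 0) (Add (Mon false 1 4 2 4) (Add (Mon false 1 6 4 2) (Add (Mon false 1 8 0 4) (Add (Mon false 1 8 4 0) (Add (Mon true 1 8 4 4) (Add (Mon true 1 8 6 4) (Add (Mon false 1 10 2 2) (Add (Mon true 1 10 2 6) (Add (Mon true 1 10 4 4) (Add (Mon true 1 12 4 2) (Add (Mon true 1 12 4 4) (Add (Mon true 1 12 6 0) (Add (Mon true 1 14 4 2) (Add (Mon false 1 14 4 6) (Add (Mon true 1 14 6 0) (Add (Mon true 1 14 6 2) (Add (Mon false 1 14 6 4) (Add (Mon false 1 14 6 6) (Add (Mon false 1 16 4 6) (Add (Mon true 1 16 6 2) (Add (Mon true 1 16 6 4) (Add (Mon false 1 18 4 4) (Add (Mon false 1 18 6 2) (Add (Mon true 1 18 8 2) (Add (Mon true 1 18 8 4) (Add (Mon false 1 20 6 2) (Add (Mon false 1 20 6 4) (Add (Mon true 1 20 6 6)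 (Add (Mon false 1 20 10 4) (Add (Mon false 1 22 6 4) (Add (Mon false 1 22 6 6) (Add (Mon false 1 24 8 4) (Add (Mon false 1 24 8 6) (Mon true 1 26 10 6)))))))))))))))))))))))))))))))))))) (Inv (Mul (Mon false 1 0 2 0) (Mul (Fac true 1 true) (Mul (Fac true 3 false) (Mul (Fac true 3 true) (Mul (Fac false 1 true) (Mul (Fac false 2 false) (Mul (Fac false 2 true) (Mul (Fac false 3 false) (Mul (Fac false 3 true) (Mul (Fac false 4 false) (Mul (Fac false 4 true) (Fac false 6 false)))))))))))))); (Mul (Add (Mon false 1 1 0 2) (Add (Mon false 1 1 2 0) (Add (Mon true 1 3 2 4) (Add (Mon true 1 3 4 2) (Add (Mon true 1 5 0 4) (Add (Mon true 1 5 2 2) (Add (Mon true 2 5 2 4) (Add (Mon true 1 5 4 0) (Add (Mon true 2 5 4 2) (Add (Mon false 1 7 4 4) (Add (Mon false 1 7 4 6) (Add (Mon false 1 7 6 4) (Add (Mon false 1 9 0 6) (Add (Mon false 1 9 2 4) (Add (Mon false 1 9 2 6) (Add (Mon false 1 9 4 2) (Add (Mon false 4 9 4 4) (Add (Mon false 1 9 4 6) (Add (Mon false 1 9 6 0) (Add (Mon false 1 9 6 2) (Add (Mon false 1 9 6 4) (Add (Mon false 1 11 0 6) (Add (Mon false 1 11 2 4) (Add (Mon false 1 11 4 2) (Add (Mon false 1 11 4 4) (Add (Mon false 1 11 6 0) (Add (Mon true 1 13 2 8) (Add (Mon true 1 13 4 4) (Add (Mon true 2 13 4 6) (Add (Mon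 true 2 13 6 4) (Add (Mon true 2 13 6 6) (Add (Mon true 1 13 8 2) (Add (Mon true 2 15 4 4) (Add (Mon true 1 15 4 6) (Add (Mon true 1 15 6 4) (Add (Mon false 1 17 2 8) (Add (Mon false 1 17 4 6) (Add (Mon false 1 17 4 8) (Add (Mon false 1 17 6 4) (Add (Mon false 1 17 6 8) (Add (Mon false 1 17 8 2) (Add (Mon false 1 17 8 4) (Add (Mon false 1 17 8 6) (Add (Mon false 1 19 4 6) (Add (Mon false 1 19 4 8) (Add (Mon true 1 19 4 10) (Add (Mon false 1 19 6 4) (Add (Mon false 1 19 6 6) (Add (Mon false 1 19 8 4) (Add (Mon true 1 19 10 4) (Add (Mon false 1 21 4 6) (Add (Mon true 1 21 4 8) (Add (Mon true 1 21 4 10) (Add (Mon false 1 21 6 4) (Add (Mon true 1 21 6 6) (Add (Mon true 1 21 8 4) (Add (Mon true 1 21 10 4) (Add (Mon false 2 23 6 6) (Add (Mon true 1 23 6 8) (Add (Mon true 1 23 8 6) (Add (Mon false 1 25 6 6) (Add (Mon false 2 25 6 8) (Add (Mon false 1 25 6 10) (Add (Mon false 2 25 8 6) (Add (Mon false 1 25 10 6) (Add (Mon false 1 27 6 8) (Add (Mon false 1 27 8 6) (Add (Mon false 1 27 8 8) (Add (Mon true 1 29 8 10) (Mon true 1 29 10 8)))))))))))))))))))))))))))))))))))))))))))))))))))))))))))))))))))))) (Inv (Mul (Mon false 1 0 2 2) (Mul (Fac true 3 false) (Mul (Fac true 3 true) (Mul (Fac false 2 false) (Mul (Fac false 2 true)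 (Mul (Fac false 3 false) (Mul (Fac false 3 true) (Mul (Fac false 4 false) (Mul (Fac false 4 true) (Mul (Fac false 6 false) (Fac false 6 true))))))))))))); (Mul (Add (Mon false 1 0 2 0) (Add (Mon false 1 0 4 0) (Add (Mon false 1 2 0 2) (Add (Mon false 1 2 2 2) (Add (Mon false 1 2 4 0) (Add (Mon true 1 2 4 2) (Add (Mon true 1 4 2 4) (Add (Mon true 1 4 4 0) (Add (Mon true 2 4 4 2) (Add (Mon true 1 6 0 4) (Add (Mon true 1 6 2 2) (Add (Mon true 2 6 2 4) (Add (Mon true 3 6 4 2) (Add (Mon true 1 6 4 4) (Add (Mon true 1 6 6 0) (Add (Mon true 1 6 6 2) (Add (Mon true 1 8 0 4) (Add (Mon true 1 8 2 2) (Add (Mon true 1 8 2 4) (Add (Mon true 1 8 4 2) (Add (Mon false 1 8 4 6) (Add (Mon false 1 8 6 0) (Add (Mon false 1 8 6 2) (Add (Mon false 1 8 6 4) (Add (Mon true 1 10 0 4) (Add (Mon false 1 10 0 6) (Add (Mon false 2 10 2 4) (Add (Mon false 1 10 2 6) (Add (Mon false 1 10 4 2) (Add (Mon false 5 10 4 4) (Add (Mon false 2 10 4 6) (Add (Mon false 1 10 6 0) (Add (Mon false 1 10 6 2) (Add (Mon false 1 10 6 4) (Add (Mon false 1 10 8 0) (Add (Mon false 2 12 0 6) (Add (Mon false 1 12 2 4) (Add (Mon false 3 12 2 6) (Add (Mon false 2 12 4 2) (Add (Mon false 4 12 4 4) (Add (Mon false 1 12 4 6) (Add (Mon false 1 12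 6 2) (Add (Mon false 2 12 6 4) (Add (Mon true 1 12 8 2) (Add (Mon false 1 14 0 6) (Add (Mon false 1 14 2 6) (Add (Mon true 1 14 2 8) (Add (Mon true 1 14 4 4) (Add (Mon true 2 14 4 6) (Add (Mon true 1 14 6 2) (Add (Mon true 2 14 6 4) (Add (Mon true 2 14 6 6) (Add (Mon true 1 14 8 2) (Add (Mon true 1 16 0 8) (Add (Mon true 1 16 2 6) (Add (Mon true 2 16 2 8) (Add (Mon true 3 16 4 4) (Add (Mon true 5 16 4 6) (Add (Mon true 1 16 4 8) (Add (Mon true 1 16 6 2) (Add (Mon true 2 16 6 4) (Add (Mon true 3 16 6 6) (Add (Mon true 1 16 8 2) (Add (Mon true 1 16 8 4) (Add (Mon true 1 18 0 8) (Add (Mon true 2 18 2 6) (Add (Mon true 1 18 2 8) (Add (Mon true 1 18 4 4) (Add (Mon true 2 18 4 6) (Add (Mon true 1 18 6 2) (Add (Mon false 1 18 6 4) (Add (Mon true 1 18 6 6) (Add (Mon false 1 18 6 8) (Add (Mon false 1 18 8 2) (Add (Mon false 1 18 8 4) (Add (Mon false 1 18 8 6) (Add (Mon false 1 18 10 2) (Add (Mon true 1 20 0 8) (Add (Mon false 2 20 2 8) (Add (Mon true 1 20 4 4) (Add (Mon false 2 20 4 6) (Add (Mon false 5 20 4 8) (Add (Mon false 3 20 6 4) (Add (Mon false 2 20 6 6) (Add (Mon false 1 20 6 8) (Add (Mon false 2 20 8 4) (Add (Mon false 1 20 8 6) (Add (Mon true 1 20 10 4) (Add (Mon false 1 22 0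 10) (Add (Mon false 1 22 2 8) (Add (Mon false 1 22 2 10) (Add (Mon false 4 22 4 6) (Add (Mon false 4 22 4 8) (Add (Mon true 1 22 4 10) (Add (Mon true 1 22 6 4) (Add (Mon false 2 22 6 6) (Add (Mon false 2 22 6 8) (Add (Mon true 1 22 10 4) (Add (Mon false 1 24 4 6) (Add (Mon true 1 24 4 8) (Add (Mon true 2 24 4 10) (Add (Mon true 1 24 6 4) (Add (Mon true 2 24 6 8) (Add (Mon true 2 24 8 4) (Add (Mon true 1 24 8 6) (Add (Mon true 1 24 10 4) (Add (Mon true 1 26 2 10) (Add (Mon true 3 26 4 8) (Add (Mon true 3 26 4 10) (Add (Mon true 1 26 6 6) (Add (Mon true 2 26 6 8) (Add (Mon true 1 26 6 10) (Add (Mon true 1 26 8 4) (Add (Mon true 1 26 8 8) (Add (Mon false 1 26 10 6) (Add (Mon true 1 28 2 10) (Add (Mon true 1 28 4 8) (Add (Mon true 1 28 4 10) (Add (Mon true 1 28 6 6) (Add (Mon false 1 28 6 8) (Add (Mon false 1 28 6 10) (Add (Mon false 2 28 8 6) (Add (Mon false 1 28 8 8) (Add (Mon false 2 28 10 6) (Add (Mon false 1 30 2 12) (Add (Mon true 1 30 4 8) (Add (Mon false 1 30 4 10) (Add (Mon false 1 30 4 12) (Add (Mon false 3 30 6 8) (Add (Mon false 1 30 6 10) (Add (Mon false 1 30 8 6) (Add (Mon false 2 30 8 8) (Add (Mon false 1 30 10 6) (Add (Mon true 1 30 10 8) (Add (Mon false 2 32 4 10) (Add (Mon false 1 32 4 12)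 (Add (Mon true 1 32 6 8) (Add (Mon false 1 32 6 10) (Add (Mon true 1 32 8 10) (Add (Mon true 1 32 10 8) (Add (Mon true 1 34 4 12) (Add (Mon true 1 34 6 8) (Add (Mon true 1 34 6 10) (Add (Mon true 2 34 8 8) (Add (Mon true 1 34 8 10) (Add (Mon true 1 34 10 8) (Add (Mon true 1 36 6 10) (Add (Mon true 1 36 6 12) (Add (Mon true 1 36 8 8) (Add (Mon true 1 36 8 10) (Add (Mon true 1 38 6 10) (Add (Mon false 1 38 6 12) (Add (Mon false 1 38 8 10) (Add (Mon false 1 38 10 10) (Add (Mon false 1 40 6 12) (Mon false 1 40 8 12)))))))))))))))))))))))))))))))))))))))))))))))))))))))))))))))))))))))))))))))))))))))))))))))))))))))))))))))))))))))))))))))))))))))))))))))))))))))))))) (Inv (Mul (Mon false 1 0 2 2) (Mul (Fac true 3 false) (Mul (Fac true 3 true) (Mul (Fac true 7 true) (Mul (Fac false 2 false) (Mul (Fac false 3 false) (Mul (Fac false 3 true) (Mul (Fac false 4 false) (Mul (Fac false 4 true) (Mul (Fac false 6 false) (Mul (Fac false 6 true) (Fac false 7 true)))))))))))))); (Mul (Add (Mon false 1 0 4 0) (Add (Mon false 1 2 4 0) (Add (Mon false 1 4 2 2) (Add (Mon true 1 6 6 0) (Add (Mon true 1 8 2 2) (Add (Mon true 1 8 4 2) (Add (Mon true 1 8 4 4) (Add (Mon true 1 8 6 2) (Add (Mon true 1 10 0 4) (Add (Mon true 1 10 2 4) (Add (Mon true 1 10 4 2) (Add (Mon true 1 10 4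 4) (Add (Mon false 1 10 8 0) (Add (Mon true 1 12 0 4) (Add (Mon false 1 12 4 2) (Add (Mon false 1 14 2 6) (Add (Mon false 2 14 4 4) (Add (Mon false 1 14 6 2) (Add (Mon false 2 14 6 4) (Add (Mon false 1 16 0 6) (Add (Mon false 2 16 2 6) (Add (Mon false 1 16 4 4) (Add (Mon true 2 16 6 2) (Add (Mon true 1 18 4 4) (Add (Mon true 1 18 4 6) (Add (Mon true 1 18 6 2) (Add (Mon true 1 18 6 6) (Add (Mon true 1 18 8 2) (Add (Mon true 1 18 8 4) (Add (Mon true 1 20 2 6) (Add (Mon true 1 20 4 4) (Add (Mon true 4 20 4 6) (Add (Mon true 1 20 6 4) (Add (Mon true 1 20 6 6) (Add (Mon false 1 20 10 2) (Add (Mon true 1 22 0 8) (Add (Mon true 1 22 2 6) (Add (Mon true 1 22 4 4) (Add (Mon true 1 22 4 6) (Add (Mon false 1 22 6 4) (Add (Mon false 1 24 4 6) (Add (Mon false 1 24 4 8) (Add (Mon true 2 24 6 4) (Add (Mon false 2 24 6 6) (Add (Mon false 1 24 8 4) (Add (Mon false 1 26 2 8) (Add (Mon false 2 26 4 6) (Add (Mon false 2 26 4 8) (Add (Mon true 1 26 6 4) (Add (Mon false 1 26 6 6) (Add (Mon true 2 26 8 4) (Add (Mon true 1 26 10 4) (Add (Mon true 1 28 6 6) (Add (Mon true 1 28 8 4) (Add (Mon true 1 28 8 6) (Add (Mon true 1 30 4 8) (Add (Mon true 1 30 6 6) (Add (Mon true 1 30 6 8) (Add (Mon true 1 30 8 6)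 (Add (Mon false 1 30 10 6) (Add (Mon true 1 32 2 10) (Add (Mon true 1 32 4 8) (Add (Mon true 1 32 6 6) (Add (Mon false 1 32 8 6) (Add (Mon false 1 32 10 6) (Add (Mon false 1 34 8 8) (Add (Mon false 1 36 4 10) (Add (Mon true 1 38 8 8) (Add (Mon true 1 40 6 10) (Mon true 1 42 6 10)))))))))))))))))))))))))))))))))))))))))))))))))))))))))))))))))))))) (Inv (Mul (Mon false 1 1 2 2) (Mul (Fac true 3 false) (Mul (Fac true 7 true) (Mul (Fac false 2 false) (Mul (Fac false 3 false) (Mul (Fac false 4 false) (Mul (Fac false 4 true) (Mul (Fac false 6 false) (Mul (Fac false 6 true) (Mul (Fac false 7 true) (Fac false 8 true))))))))))))); (Mul (Add (Mon true 1 12 2 2) (Add (Mon false 1 16 2 4) (Add (Mon false 1 16 4 2) (Add (Mon false 1 16 6 2) (Add (Mon false 1 18 4 2) (Add (Mon false 1 20 0 4) (Add (Mon true 1 20 4 4) (Add (Mon true 1 20 6 4) (Add (Mon true 1 22 4 4) (Add (Mon true 1 22 6 2) (Add (Mon true 1 24 0 6) (Add (Mon true 1 24 4 4) (Add (Mon false 1 24 6 2) (Add (Mon false 1 26 6 4) (Add (Mon false 1 26 8 2) (Add (Mon false 1 28 4 6) (Add (Mon true 1 28 6 4) (Add (Mon true 1 28 10 2) (Add (Mon false 1 30 4 4) (Add (Mon true 1 30 8 4) (Add (Mon false 1 32 2 6) (Add (Mon false 1 32 6 4) (Add (Mon false 1 32 10 4) (Add (Mon true 1 34 4 6) (Add (Mon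 false 1 34 6 4) (Add (Mon true 1 36 2 8) (Add (Mon true 1 36 4 6) (Add (Mon true 1 36 6 6) (Add (Mon false 1 36 8 4) (Add (Mon true 1 38 6 6) (Add (Mon false 1 40 4 8) (Add (Mon false 1 40 6 6) (Add (Mon true 1 40 8 6) (Add (Mon false 1 42 6 6) (Add (Mon true 1 44 6 8) (Mon true 1 46 6 8)))))))))))))))))))))))))))))))))))) (Inv (Mul (Mon false 1 0 2 0) (Mul (Fac true 3 false) (Mul (Fac true 7 true) (Mul (Fac true 9 true) (Mul (Fac false 2 false) (Mul (Fac false 3 false) (Mul (Fac false 4 false) (Mul (Fac false 6 false) (Mul (Fac false 6 true) (Mul (Fac false 7 true) (Mul (Fac false 8 true) (Fac false 9 true))))))))))))))];
  [:: (Mul (Add (Mon true 1 1 0 2) (Add (Mon true 1 1 0 4) (Add (Mon false 1 3 2 4) (Add (Mon true 1 5 2 0) (Add (Mon false 1 5 2 4) (Add (Mon false 1 7 0 4) (Add (Mon false 1 7 0 6) (Add (Mon false 1 7 2 4) (Add (Mon false 1 7 4 2) (Add (Mon false 1 7 4 4) (Add (Mon false 1 9 2 2) (Add (Mon true 1 9 2 6) (Add (Mon false 1 9 4 0) (Add (Mon true 1 9 4 4) (Add (Mon true 1 9 6 4) (Add (Mon false 1 11 2 2) (Add (Mon true 1 11 2 6) (Add (Mon false 1 11 4 0) (Add (Mon true 1 11 4 2) (Add (Mon true 2 11 4 4) (Add (Mon true 1 11 6 4) (Add (Mon true 1 13 2 6) (Add (Mon false 1 13 4 0) (Add (Mon true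 2 13 4 4) (Add (Mon true 1 13 4 6) (Add (Mon true 1 13 6 0) (Add (Mon true 1 13 6 2) (Add (Mon true 1 15 2 4) (Add (Mon false 1 15 4 4) (Add (Mon false 1 15 4 6) (Add (Mon true 2 15 6 0) (Add (Mon true 1 15 6 2) (Add (Mon false 1 15 6 4) (Add (Mon false 1 15 6 6) (Add (Mon true 1 17 4 2) (Add (Mon false 1 17 4 4) (Add (Mon false 2 17 4 6) (Add (Mon true 1 17 6 0) (Add (Mon true 1 17 6 2) (Add (Mon false 1 17 6 4) (Add (Mon false 1 17 6 6) (Add (Mon false 1 17 8 2) (Add (Mon false 1 17 8 4) (Add (Mon true 1 19 4 2) (Add (Mon false 1 19 4 6) (Add (Mon false 2 19 6 2) (Add (Mon false 1 19 6 4) (Add (Mon false 1 19 8 0) (Add (Mon true 1 19 8 4) (Add (Mon true 1 21 4 4) (Add (Mon true 1 21 4 6) (Add (Mon false 2 21 6 2) (Add (Mon false 1 21 6 4) (Add (Mon true 1 21 6 6) (Add (Mon false 1 21 8 0) (Add (Mon true 1 21 8 2) (Add (Mon true 2 21 8 4) (Add (Mon false 1 23 6 2) (Add (Mon false 1 23 6 4) (Add (Mon true 1 23 6 6) (Add (Mon false 1 23 8 0) (Add (Mon true 2 23 8 4) (Add (Mon true 1 23 8 6) (Add (Mon false 1 23 10 4) (Add (Mon true 1 25 6 4) (Add (Mon false 1 25 8 4) (Add (Mon false 1 25 8 6) (Add (Mon true 1 25 10 0) (Add (Mon false 1 25 10 4) (Add (Mon true 1 27 8 2) (Add (Mon false 1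 27 8 4) (Add (Mon false 2 27 8 6) (Add (Mon false 1 27 10 4) (Add (Mon true 1 29 8 2) (Add (Mon false 1 29 8 6) (Add (Mon false 1 29 10 2) (Add (Mon true 1 29 10 6) (Add (Mon true 1 31 8 4) (Add (Mon true 1 31 8 6) (Add (Mon false 1 31 10 2) (Add (Mon true 1 31 10 6) (Add (Mon true 1 31 12 2) (Add (Mon true 1 31 12 4) (Add (Mon true 1 33 10 6) (Add (Mon true 1 35 10 4) (Add (Mon false 1 37 12 4) (Mon false 1 37 12 6))))))))))))))))))))))))))))))))))))))))))))))))))))))))))))))))))))))))))))))))))))))) (Inv (Mul (Mon false 1 0 2 0) (Mul (Fac true 1 true) (Mul (Fac true 3 false) (Mul (Fac true 3 true) (Mul (Fac true 7 false) (Mul (Fac false 1 true) (Mul (Fac false 2 true) (Mul (Fac false 3 false) (Mul (Fac false 3 true) (Mul (Fac false 4 false) (Mul (Fac false 4 true) (Mul (Fac false 6 false) (Fac false 7 false))))))))))))))); (Mul (Add (Mon false 1 0 0 2) (Add (Mon false 1 0 0 4) (Add (Mon false 1 2 0 4) (Add (Mon false 1 2 2 0) (Add (Mon false 1 2 2 2) (Add (Mon true 1 2 2 4) (Add (Mon true 1 4 0 4) (Add (Mon true 2 4 2 4) (Add (Mon true 1 4 4 2) (Add (Mon true 1 6 0 6) (Add (Mon true 1 6 2 2) (Add (Mon true 3 6 2 4) (Add (Mon true 1 6 2 6) (Add (Mon true 1 6 4 0) (Add (Mon true 2 6 4 2) (Add (Mon true 1 6 4 4) (Add (Mon false 1 8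 0 6) (Add (Mon true 1 8 2 2) (Add (Mon true 1 8 2 4) (Add (Mon false 1 8 2 6) (Add (Mon true 1 8 4 0) (Add (Mon true 1 8 4 2) (Add (Mon false 1 8 4 6) (Add (Mon false 1 8 6 4) (Add (Mon false 1 10 0 6) (Add (Mon false 1 10 0 8) (Add (Mon false 1 10 2 4) (Add (Mon false 1 10 2 6) (Add (Mon true 1 10 4 0) (Add (Mon false 2 10 4 2) (Add (Mon false 5 10 4 4) (Add (Mon false 1 10 4 6) (Add (Mon false 1 10 6 0) (Add (Mon false 1 10 6 2) (Add (Mon false 2 10 6 4) (Add (Mon false 2 12 2 4) (Add (Mon false 1 12 2 6) (Add (Mon true 1 12 2 8) (Add (Mon false 1 12 4 2) (Add (Mon false 4 12 4 4) (Add (Mon false 2 12 4 6) (Add (Mon false 2 12 6 0) (Add (Mon false 3 12 6 2) (Add (Mon false 1 12 6 4) (Add (Mon true 1 14 2 6) (Add (Mon true 1 14 2 8) (Add (Mon true 1 14 4 4) (Add (Mon true 2 14 4 6) (Add (Mon false 1 14 6 0) (Add (Mon false 1 14 6 2) (Add (Mon true 2 14 6 4) (Add (Mon true 2 14 6 6) (Add (Mon true 1 14 8 2) (Add (Mon true 1 16 2 6) (Add (Mon true 1 16 2 8) (Add (Mon true 3 16 4 4) (Add (Mon true 2 16 4 6) (Add (Mon true 1 16 4 8) (Add (Mon true 1 16 6 2) (Add (Mon true 5 16 6 4) (Add (Mon true 3 16 6 6) (Add (Mon true 1 16 8 0) (Add (Mon true 2 16 8 2) (Add (Mon true 1 16 8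 4) (Add (Mon true 1 18 2 6) (Add (Mon false 1 18 2 8) (Add (Mon false 1 18 2 10) (Add (Mon true 1 18 4 4) (Add (Mon false 1 18 4 6) (Add (Mon false 1 18 4 8) (Add (Mon true 2 18 6 2) (Add (Mon true 2 18 6 4) (Add (Mon true 1 18 6 6) (Add (Mon false 1 18 6 8) (Add (Mon true 1 18 8 0) (Add (Mon true 1 18 8 2) (Add (Mon false 1 18 8 6) (Add (Mon true 1 20 4 4) (Add (Mon false 3 20 4 6) (Add (Mon false 2 20 4 8) (Add (Mon true 1 20 4 10) (Add (Mon false 2 20 6 4) (Add (Mon false 2 20 6 6) (Add (Mon false 1 20 6 8) (Add (Mon true 1 20 8 0) (Add (Mon false 2 20 8 2) (Add (Mon false 5 20 8 4) (Add (Mon false 1 20 8 6) (Add (Mon true 1 22 4 6) (Add (Mon true 1 22 4 10) (Add (Mon false 4 22 6 4) (Add (Mon false 2 22 6 6) (Add (Mon false 1 22 8 2) (Add (Mon false 4 22 8 4) (Add (Mon false 2 22 8 6) (Add (Mon false 1 22 10 0) (Add (Mon false 1 22 10 2) (Add (Mon true 1 22 10 4) (Add (Mon true 1 24 4 6) (Add (Mon true 2 24 4 8) (Add (Mon true 1 24 4 10) (Add (Mon false 1 24 6 4) (Add (Mon true 1 24 6 8) (Add (Mon true 1 24 8 4) (Add (Mon true 2 24 8 6) (Add (Mon true 2 24 10 4) (Add (Mon true 1 26 4 8) (Add (Mon true 1 26 6 6) (Add (Mon false 1 26 6 10) (Add (Mon true 3 26 8 4) (Add (Mon true 2 26 8 6)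 (Add (Mon true 1 26 8 8) (Add (Mon true 1 26 10 2) (Add (Mon true 3 26 10 4) (Add (Mon true 1 26 10 6) (Add (Mon true 1 28 6 6) (Add (Mon false 2 28 6 8) (Add (Mon false 2 28 6 10) (Add (Mon true 1 28 8 4) (Add (Mon false 1 28 8 6) (Add (Mon false 1 28 8 8) (Add (Mon true 1 28 10 2) (Add (Mon true 1 28 10 4) (Add (Mon false 1 28 10 6) (Add (Mon false 1 30 6 8) (Add (Mon false 1 30 6 10) (Add (Mon true 1 30 8 4) (Add (Mon false 3 30 8 6) (Add (Mon false 2 30 8 8) (Add (Mon true 1 30 8 10) (Add (Mon false 1 30 10 4) (Add (Mon false 1 30 10 6) (Add (Mon false 1 30 12 2) (Add (Mon false 1 30 12 4) (Add (Mon true 1 32 8 6) (Add (Mon true 1 32 8 10) (Add (Mon false 2 32 10 4) (Add (Mon false 1 32 10 6) (Add (Mon true 1 32 10 8) (Add (Mon false 1 32 12 4) (Add (Mon true 1 34 8 6) (Add (Mon true 2 34 8 8) (Add (Mon true 1 34 8 10) (Add (Mon true 1 34 10 6) (Add (Mon true 1 34 10 8) (Add (Mon true 1 34 12 4) (Add (Mon true 1 36 8 8) (Add (Mon true 1 36 10 6) (Add (Mon true 1 36 10 8) (Add (Mon true 1 36 12 6) (Add (Mon true 1 38 10 6) (Add (Mon false 1 38 10 8) (Add (Mon false 1 38 10 10) (Add (Mon false 1 38 12 6) (Add (Mon false 1 40 12 6) (Mon false 1 40 12 8))))))))))))))))))))))))))))))))))))))))))))))))))))))))))))))))))))))))))))))))))))))))))))))))))))))))))))))))))))))))))))))))))))))))))))))))))))))))))))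 (Inv (Mul (Mon false 1 0 2 2) (Mul (Fac true 3 false) (Mul (Fac true 3 true) (Mul (Fac true 7 false) (Mul (Fac false 2 true) (Mul (Fac false 3 false) (Mul (Fac false 3 true) (Mul (Fac false 4 false) (Mul (Fac false 4 true) (Mul (Fac false 6 false) (Mul (Fac false 6 true) (Fac false 7 false)))))))))))))); (Mul (Add (Mon true 1 0 0 2) (Add (Mon true 1 0 2 0) (Add (Mon false 1 2 0 2) (Add (Mon false 1 2 0 4) (Add (Mon false 1 2 2 0) (Add (Mon false 2 2 2 2) (Add (Mon false 1 2 4 0) (Add (Mon false 1 4 0 4) (Add (Mon false 2 4 2 2) (Add (Mon true 1 4 2 4) (Add (Mon false 1 4 4 0) (Add (Mon true 1 4 4 2) (Add (Mon false 1 6 2 2) (Add (Mon true 1 6 2 4) (Add (Mon true 1 6 4 2) (Add (Mon true 1 8 0 4) (Add (Mon true 1 8 0 6) (Add (Mon true 1 8 2 2) (Add (Mon true 4 8 2 4) (Add (Mon true 1 8 2 6) (Add (Mon true 1 8 4 0) (Add (Mon true 4 8 4 2) (Add (Mon true 2 8 4 4) (Add (Mon true 1 8 6 0) (Add (Mon true 1 8 6 2) (Add (Mon true 1 10 0 4) (Add (Mon true 1 10 0 6) (Add (Mon true 2 10 2 2) (Add (Mon true 3 10 2 4) (Add (Mon true 1 10 4 0) (Add (Mon true 3 10 4 2) (Add (Mon true 1 10 4 4) (Add (Mon false 1 10 4 6) (Add (Mon true 1 10 6 0) (Add (Mon false 1 10 6 4) (Add (Mon false 1 12 0 6) (Add (Mon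 false 1 12 0 8) (Add (Mon false 1 12 2 4) (Add (Mon false 3 12 2 6) (Add (Mon false 1 12 4 2) (Add (Mon false 4 12 4 4) (Add (Mon false 2 12 4 6) (Add (Mon false 1 12 6 0) (Add (Mon false 3 12 6 2) (Add (Mon false 2 12 6 4) (Add (Mon false 1 12 8 0) (Add (Mon false 1 14 0 6) (Add (Mon false 1 14 0 8) (Add (Mon false 3 14 2 4) (Add (Mon false 5 14 2 6) (Add (Mon true 1 14 2 8) (Add (Mon false 3 14 4 2) (Add (Mon false 7 14 4 4) (Add (Mon false 3 14 4 6) (Add (Mon false 1 14 6 0) (Add (Mon false 5 14 6 2) (Add (Mon false 3 14 6 4) (Add (Mon false 1 14 8 0) (Add (Mon true 1 14 8 2) (Add (Mon false 1 16 2 4) (Add (Mon false 2 16 2 6) (Add (Mon true 1 16 2 8) (Add (Mon false 1 16 4 2) (Add (Mon false 1 16 4 4) (Add (Mon false 1 16 4 6) (Add (Mon false 2 16 6 2) (Add (Mon false 1 16 6 4) (Add (Mon true 2 16 6 6) (Add (Mon true 1 16 8 2) (Add (Mon true 1 18 0 8) (Add (Mon false 1 18 2 4) (Add (Mon true 2 18 2 6) (Add (Mon true 4 18 2 8) (Add (Mon false 1 18 4 2) (Add (Mon true 5 18 4 4) (Add (Mon true 5 18 4 6) (Add (Mon true 2 18 4 8) (Add (Mon true 2 18 6 2) (Add (Mon true 5 18 6 4) (Add (Mon true 6 18 6 6) (Add (Mon true 1 18 8 0) (Add (Mon true 4 18 8 2) (Add (Mon true 2 18 8 4) (Add (Mon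 true 1 20 0 8) (Add (Mon true 1 20 0 10) (Add (Mon true 4 20 2 6) (Add (Mon true 3 20 2 8) (Add (Mon true 5 20 4 4) (Add (Mon true 5 20 4 6) (Add (Mon true 1 20 4 8) (Add (Mon true 4 20 6 2) (Add (Mon true 5 20 6 4) (Add (Mon true 6 20 6 6) (Add (Mon false 1 20 6 8) (Add (Mon true 1 20 8 0) (Add (Mon true 3 20 8 2) (Add (Mon true 1 20 8 4) (Add (Mon false 1 20 8 6) (Add (Mon true 1 20 10 0) (Add (Mon false 1 22 0 10) (Add (Mon true 1 22 2 6) (Add (Mon false 1 22 2 8) (Add (Mon false 2 22 2 10) (Add (Mon false 1 22 4 6) (Add (Mon false 4 22 4 8) (Add (Mon true 1 22 6 2) (Add (Mon false 1 22 6 4) (Add (Mon false 1 22 6 6) (Add (Mon false 2 22 6 8) (Add (Mon false 1 22 8 2) (Add (Mon false 4 22 8 4) (Add (Mon false 2 22 8 6) (Add (Mon false 1 22 10 0) (Add (Mon false 2 22 10 2) (Add (Mon false 3 24 2 8) (Add (Mon false 2 24 2 10) (Add (Mon false 1 24 4 4) (Add (Mon false 5 24 4 6) (Add (Mon false 7 24 4 8) (Add (Mon true 1 24 4 10) (Add (Mon false 5 24 6 4) (Add (Mon false 7 24 6 6) (Add (Mon false 3 24 6 8) (Add (Mon false 3 24 8 2) (Add (Mon false 7 24 8 4) (Add (Mon false 3 24 8 6) (Add (Mon false 2 24 10 2) (Add (Mon true 1 24 10 4) (Add (Mon false 1 26 2 8) (Add (Mon false 1 26 2 10) (Add (Mon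 false 2 26 4 6) (Add (Mon false 1 26 4 8) (Add (Mon true 1 26 4 10) (Add (Mon false 2 26 6 4) (Add (Mon false 4 26 6 6) (Add (Mon false 1 26 6 8) (Add (Mon false 1 26 8 2) (Add (Mon false 1 26 8 4) (Add (Mon false 1 26 8 6) (Add (Mon false 1 26 10 2) (Add (Mon true 1 26 10 4) (Add (Mon false 1 28 2 8) (Add (Mon true 1 28 2 10) (Add (Mon false 1 28 4 6) (Add (Mon true 5 28 4 8) (Add (Mon true 4 28 4 10) (Add (Mon false 1 28 6 4) (Add (Mon true 4 28 6 6) (Add (Mon true 5 28 6 8) (Add (Mon true 1 28 6 10) (Add (Mon false 1 28 8 2) (Add (Mon true 5 28 8 4) (Add (Mon true 5 28 8 6) (Add (Mon true 2 28 8 8) (Add (Mon true 1 28 10 2) (Add (Mon true 4 28 10 4) (Add (Mon true 1 28 10 6) (Add (Mon true 2 30 2 10) (Add (Mon true 1 30 2 12) (Add (Mon true 5 30 4 8) (Add (Mon true 3 30 4 10) (Add (Mon true 7 30 6 6) (Add (Mon true 5 30 6 8) (Add (Mon true 5 30 8 4) (Add (Mon true 5 30 8 6) (Add (Mon true 1 30 8 8) (Add (Mon true 2 30 10 2) (Add (Mon true 3 30 10 4) (Add (Mon true 1 30 12 2) (Add (Mon false 1 32 2 12) (Add (Mon false 1 32 4 10) (Add (Mon false 1 32 4 12) (Add (Mon true 3 32 6 6) (Add (Mon false 1 32 6 8) (Add (Mon false 3 32 6 10) (Add (Mon false 1 32 8 6) (Add (Mon false 4 32 8 8) (Add (Mon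 false 1 32 10 4) (Add (Mon false 3 32 10 6) (Add (Mon false 1 32 12 2) (Add (Mon false 1 32 12 4) (Add (Mon false 1 34 4 8) (Add (Mon false 3 34 4 10) (Add (Mon false 1 34 4 12) (Add (Mon false 5 34 6 8) (Add (Mon false 5 34 6 10) (Add (Mon false 1 34 8 4) (Add (Mon false 5 34 8 6) (Add (Mon false 7 34 8 8) (Add (Mon true 1 34 8 10) (Add (Mon false 3 34 10 4) (Add (Mon false 5 34 10 6) (Add (Mon true 1 34 10 8) (Add (Mon false 1 34 12 4) (Add (Mon false 1 36 4 10) (Add (Mon false 2 36 6 8) (Add (Mon false 2 36 6 10) (Add (Mon false 2 36 8 6) (Add (Mon false 1 36 8 8) (Add (Mon true 1 36 8 10) (Add (Mon false 1 36 10 4) (Add (Mon false 2 36 10 6) (Add (Mon true 1 36 10 8) (Add (Mon false 1 38 4 10) (Add (Mon true 1 38 4 12) (Add (Mon false 1 38 6 8) (Add (Mon true 2 38 6 10) (Add (Mon true 1 38 6 12) (Add (Mon false 1 38 8 6) (Add (Mon true 5 38 8 8) (Add (Mon true 4 38 8 10) (Add (Mon false 1 38 10 4) (Add (Mon true 2 38 10 6) (Add (Mon true 4 38 10 8) (Add (Mon true 1 38 12 4) (Add (Mon true 1 38 12 6) (Add (Mon true 1 40 4 12) (Add (Mon true 4 40 6 10) (Add (Mon true 1 40 6 12) (Add (Mon true 5 40 8 8) (Add (Mon true 3 40 8 10) (Add (Mon true 4 40 10 6) (Add (Mon true 3 40 10 8) (Add (Mon true 1 40 12 4) (Add (Mon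 true 1 40 12 6) (Add (Mon true 1 42 6 10) (Add (Mon false 1 42 6 12) (Add (Mon false 1 42 8 10) (Add (Mon false 1 42 8 12) (Add (Mon true 1 42 10 6) (Add (Mon false 1 42 10 8) (Add (Mon false 2 42 10 10) (Add (Mon false 1 42 12 6) (Add (Mon false 1 42 12 8) (Add (Mon false 1 44 6 12) (Add (Mon false 1 44 8 8) (Add (Mon false 3 44 8 10) (Add (Mon false 1 44 8 12) (Add (Mon false 3 44 10 8) (Add (Mon false 2 44 10 10) (Add (Mon false 1 44 12 6) (Add (Mon false 1 44 12 8) (Add (Mon false 1 46 8 10) (Add (Mon false 1 46 10 8) (Add (Mon false 1 46 10 10) (Add (Mon false 1 48 8 10) (Add (Mon true 1 48 8 12) (Add (Mon false 1 48 10 8) (Add (Mon true 1 48 10 10) (Add (Mon true 1 48 12 8) (Add (Mon true 1 50 8 12) (Add (Mon true 2 50 10 10) (Add (Mon true 1 50 10 12) (Add (Mon true 1 50 12 8) (Add (Mon true 1 50 12 10) (Add (Mon false 1 52 10 12) (Mon false 1 52 12 10))))))))))))))))))))))))))))))))))))))))))))))))))))))))))))))))))))))))))))))))))))))))))))))))))))))))))))))))))))))))))))))))))))))))))))))))))))))))))))))))))))))))))))))))))))))))))))))))))))))))))))))))))))))))))))))))))))))))))))))))))))))))))))))))) (Inv (Mul (Mon false 1 1 2 2) (Mul (Fac true 3 false) (Mul (Fac true 3 true) (Mul (Fac true 7 false) (Mul (Fac true 7 true) (Mul (Fac false 3 false) (Mul (Fac false 3 true) (Mul (Fac false 4 false)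 (Mul (Fac false 4 true) (Mul (Fac false 6 false) (Mul (Fac false 6 true) (Mul (Fac false 7 false) (Fac false 7 true))))))))))))))); (Mul (Add (Mon true 1 0 2 0) (Add (Mon true 1 2 0 2) (Add (Mon false 1 2 4 0) (Add (Mon false 1 4 2 2) (Add (Mon false 1 4 4 0) (Add (Mon false 1 6 2 2) (Add (Mon false 1 6 4 0) (Add (Mon false 1 8 0 4) (Add (Mon false 1 8 2 2) (Add (Mon false 1 8 2 4) (Add (Mon false 1 8 4 2) (Add (Mon true 1 8 6 0) (Add (Mon true 1 10 0 4) (Add (Mon true 1 10 2 2) (Add (Mon true 1 10 2 4) (Add (Mon true 1 10 4 2) (Add (Mon true 1 10 4 4) (Add (Mon true 2 10 6 0) (Add (Mon true 1 10 6 2) (Add (Mon true 1 12 0 4) (Add (Mon true 1 12 0 6) (Add (Mon true 1 12 2 4) (Add (Mon true 2 12 4 2) (Add (Mon true 1 12 4 4) (Add (Mon true 1 12 6 0) (Add (Mon true 1 12 6 2) (Add (Mon false 1 12 8 0) (Add (Mon true 1 14 0 6) (Add (Mon true 1 14 2 4) (Add (Mon false 1 14 2 6) (Add (Mon true 2 14 4 4) (Add (Mon false 1 14 8 0) (Add (Mon false 1 16 0 6) (Add (Mon false 1 16 2 4) (Add (Mon false 2 16 2 6) (Add (Mon false 2 16 4 2) (Add (Mon false 2 16 4 4) (Add (Mon false 1 16 6 2) (Add (Mon false 2 16 6 4) (Add (Mon false 1 16 8 0) (Add (Mon false 1 18 2 4) (Add (Mon false 3 18 2 6) (Add (Mon false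 1 18 4 2) (Add (Mon false 2 18 4 4) (Add (Mon false 1 18 4 6) (Add (Mon false 3 18 6 4) (Add (Mon false 1 18 8 2) (Add (Mon false 1 20 2 4) (Add (Mon false 1 20 2 6) (Add (Mon true 1 20 4 4) (Add (Mon true 2 20 6 2) (Add (Mon false 1 20 6 4) (Add (Mon true 1 20 6 6) (Add (Mon true 1 20 8 2) (Add (Mon true 1 20 8 4) (Add (Mon true 1 20 10 0) (Add (Mon true 1 22 0 8) (Add (Mon true 1 22 2 6) (Add (Mon true 3 22 4 4) (Add (Mon true 5 22 4 6) (Add (Mon true 1 22 6 2) (Add (Mon true 2 22 6 4) (Add (Mon true 2 22 6 6) (Add (Mon true 2 22 8 2) (Add (Mon true 1 22 8 4) (Add (Mon true 2 24 2 6) (Add (Mon true 1 24 2 8) (Add (Mon false 1 24 4 4) (Add (Mon true 4 24 4 6) (Add (Mon true 2 24 6 4) (Add (Mon true 1 24 6 6) (Add (Mon true 2 24 8 4) (Add (Mon false 1 24 10 2) (Add (Mon false 1 26 4 4) (Add (Mon false 1 26 4 6) (Add (Mon false 1 26 4 8) (Add (Mon false 2 26 6 6) (Add (Mon false 2 26 8 2) (Add (Mon false 2 26 8 4) (Add (Mon false 1 26 10 2) (Add (Mon false 1 28 2 8) (Add (Mon false 3 28 4 6) (Add (Mon false 2 28 4 8) (Add (Mon false 1 28 6 4) (Add (Mon false 5 28 6 6) (Add (Mon false 1 28 8 2) (Add (Mon false 2 28 8 4) (Add (Mon false 1 28 8 6) (Add (Mon false 1 28 10 2) (Add (Mon false 1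 28 10 4) (Add (Mon false 1 30 2 8) (Add (Mon false 1 30 4 6) (Add (Mon false 1 30 4 8) (Add (Mon false 1 30 6 4) (Add (Mon false 2 30 6 6) (Add (Mon true 1 30 8 4) (Add (Mon true 1 30 10 2) (Add (Mon true 1 30 10 4) (Add (Mon false 1 32 4 6) (Add (Mon true 2 32 4 8) (Add (Mon true 2 32 6 6) (Add (Mon true 1 32 6 8) (Add (Mon true 3 32 8 4) (Add (Mon true 5 32 8 6) (Add (Mon true 1 32 10 4) (Add (Mon true 1 32 12 2) (Add (Mon true 1 34 2 10) (Add (Mon true 1 34 4 8) (Add (Mon true 4 34 6 6) (Add (Mon true 3 34 6 8) (Add (Mon false 1 34 8 4) (Add (Mon true 4 34 8 6) (Add (Mon true 1 34 10 4) (Add (Mon false 1 34 10 6) (Add (Mon true 1 36 6 6) (Add (Mon true 1 36 6 8) (Add (Mon false 1 36 8 4) (Add (Mon false 1 36 8 6) (Add (Mon false 1 36 8 8) (Add (Mon false 1 36 10 4) (Add (Mon false 2 36 10 6) (Add (Mon false 1 38 4 10) (Add (Mon false 1 38 6 8) (Add (Mon false 3 38 8 6) (Add (Mon false 2 38 8 8) (Add (Mon false 1 38 10 4) (Add (Mon false 3 38 10 6) (Add (Mon false 1 38 12 4) (Add (Mon false 1 40 4 10) (Add (Mon false 2 40 6 8) (Add (Mon false 1 40 8 6) (Add (Mon false 1 40 8 8) (Add (Mon false 1 40 10 4) (Add (Mon false 1 40 10 6) (Add (Mon true 1 40 12 4) (Add (Mon false 1 42 4 10) (Add (Mon true 1 42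 6 10) (Add (Mon false 1 42 8 6) (Add (Mon true 2 42 8 8) (Add (Mon true 1 42 10 6) (Add (Mon true 1 42 12 4) (Add (Mon true 1 42 12 6) (Add (Mon true 2 44 6 10) (Add (Mon true 1 44 8 8) (Add (Mon true 2 44 10 6) (Add (Mon true 1 44 10 8) (Add (Mon true 1 44 12 6) (Add (Mon true 1 46 6 10) (Add (Mon false 1 46 12 6) (Add (Mon false 1 48 8 10) (Add (Mon false 1 48 10 8) (Add (Mon false 1 50 8 10) (Add (Mon false 1 50 10 8) (Add (Mon false 1 52 8 10) (Add (Mon true 1 52 12 8) (Mon true 1 54 10 10)))))))))))))))))))))))))))))))))))))))))))))))))))))))))))))))))))))))))))))))))))))))))))))))))))))))))))))))))))))))))))))))))))))))))))))))))))))))))))) (Inv (Mul (Mon false 1 2 2 2) (Mul (Fac true 3 false) (Mul (Fac true 7 false) (Mul (Fac true 7 true) (Mul (Fac false 3 false) (Mul (Fac false 4 false) (Mul (Fac false 4 true) (Mul (Fac false 6 false) (Mul (Fac false 6 true) (Mul (Fac false 7 false) (Mul (Fac false 7 true) (Fac false 8 true)))))))))))))); (Mul (Add (Mon false 1 9 0 2) (Add (Mon true 1 11 2 2) (Add (Mon true 1 13 0 4) (Add (Mon true 1 13 2 2) (Add (Mon true 1 15 2 2) (Add (Mon false 1 15 2 4) (Add (Mon true 1 15 4 2) (Add (Mon false 1 17 2 4) (Add (Mon false 1 17 4 2) (Add (Mon false 1 17 6 2) (Add (Mon false 1 19 0 4) (Add (Mon false 1 19 2 4) (Add (Mon false 2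 19 4 2) (Add (Mon false 1 19 4 4) (Add (Mon false 1 19 6 2) (Add (Mon false 1 21 4 2) (Add (Mon true 1 21 4 4) (Add (Mon true 1 21 6 4) (Add (Mon true 1 23 0 6) (Add (Mon true 1 23 4 2) (Add (Mon true 2 23 4 4) (Add (Mon true 1 23 6 2) (Add (Mon true 1 23 6 4) (Add (Mon true 2 25 4 4) (Add (Mon true 1 25 6 2) (Add (Mon true 1 25 8 2) (Add (Mon true 1 27 2 4) (Add (Mon false 1 27 4 4) (Add (Mon false 1 27 6 4) (Add (Mon false 1 27 8 2) (Add (Mon false 1 29 4 4) (Add (Mon false 1 29 4 6) (Add (Mon false 1 29 6 4) (Add (Mon false 2 29 8 2) (Add (Mon false 1 29 8 4) (Add (Mon false 1 31 2 6) (Add (Mon false 1 31 6 4) (Add (Mon false 1 31 8 2) (Add (Mon true 1 31 8 4) (Add (Mon true 1 31 10 2) (Add (Mon false 1 33 2 6) (Add (Mon true 1 33 4 4) (Add (Mon true 1 33 4 6) (Add (Mon false 1 33 6 4) (Add (Mon true 1 33 8 2) (Add (Mon true 2 33 8 4) (Add (Mon true 1 33 10 2) (Add (Mon false 1 35 6 4) (Add (Mon true 1 35 6 6) (Add (Mon true 2 35 8 4) (Add (Mon true 1 35 10 2) (Add (Mon false 1 35 10 4) (Add (Mon true 1 37 2 8) (Add (Mon true 1 37 6 4) (Add (Mon true 1 37 6 6) (Add (Mon false 1 37 8 4) (Add (Mon false 1 37 10 4) (Add (Mon true 1 39 4 6) (Add (Mon true 1 39 6 6) (Add (Mon false 1 39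 8 4) (Add (Mon false 1 39 8 6) (Add (Mon false 1 39 10 4) (Add (Mon false 1 39 12 2) (Add (Mon true 1 41 4 6) (Add (Mon false 1 41 4 8) (Add (Mon false 2 41 6 6) (Add (Mon false 1 43 4 8) (Add (Mon false 2 43 6 6) (Add (Mon true 1 43 8 4) (Add (Mon true 1 43 8 6) (Add (Mon true 1 43 12 4) (Add (Mon false 1 45 4 8) (Add (Mon false 1 45 6 6) (Add (Mon true 1 45 6 8) (Add (Mon true 2 47 6 8) (Add (Mon true 1 47 10 4) (Add (Mon true 1 49 6 8) (Add (Mon true 1 49 8 6) (Add (Mon false 1 49 12 4) (Add (Mon true 1 51 8 6) (Add (Mon false 1 51 8 8) (Add (Mon false 1 51 10 6) (Add (Mon false 1 53 8 8) (Add (Mon false 1 53 10 6) (Add (Mon true 1 53 12 6) (Add (Mon false 1 55 8 8) (Mon true 1 57 10 8))))))))))))))))))))))))))))))))))))))))))))))))))))))))))))))))))))))))))))))))))))))) (Inv (Mul (Mon false 1 0 2 0) (Mul (Fac true 3 false) (Mul (Fac true 7 false) (Mul (Fac true 7 true) (Mul (Fac true 9 true) (Mul (Fac false 3 false) (Mul (Fac false 4 false) (Mul (Fac false 6 false) (Mul (Fac false 6 true) (Mul (Fac false 7 false) (Mul (Fac false 7 true) (Mul (Fac false 8 true) (Fac false 9 true)))))))))))))))];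
  [:: (Mul (Add (Mon true 1 0 0 4) (Add (Mon false 1 6 0 6) (Add (Mon false 1 8 2 2) (Add (Mon false 1 8 2 4) (Add (Mon false 1 8 4 4) (Add (Mon false 1 12 4 0) (Add (Mon true 1 14 2 4) (Add (Mon true 1 14 2 6) (Add (Mon false 1 14 4 0) (Add (Mon false 1 14 4 2) (Add (Mon true 1 14 4 4) (Add (Mon true 1 14 4 6) (Add (Mon false 1 16 4 2) (Add (Mon false 1 16 4 4) (Add (Mon true 1 16 6 2) (Add (Mon true 1 18 4 2) (Add (Mon true 1 18 6 0) (Add (Mon false 1 18 6 4) (Add (Mon true 1 20 4 2) (Add (Mon true 1 20 4 4) (Add (Mon false 1 20 4 6) (Add (Mon false 1 20 6 4) (Add (Mon true 1 22 4 4) (Add (Mon true 1 22 4 6) (Add (Mon false 1 22 6 2) (Add (Mon false 1 22 6 4) (Add (Mon false 1 24 6 2) (Add (Mon true 1 24 6 6) (Add (Mon false 1 24 8 0) (Add (Mon true 1 24 8 4) (Add (Mon true 1 26 6 6) (Add (Mon true 1 28 6 4) (Add (Mon true 1 30 8 2) (Add (Mon false 1 30 8 6) (Add (Mon false 1 32 10 2) (Mon true 1 38 10 4)))))))))))))))))))))))))))))))))))) (Inv (Mul (Mon false 1 0 2 0) (Mul (Fac true 1 true) (Mul (Fac true 3 true) (Mul (Fac true 7 false) (Mul (Fac false 1 true) (Mul (Fac false 2 true) (Mul (Fac false 3 true) (Mul (Fac false 4 false) (Mul (Fac false 4 true) (Mul (Fac false 6 false) (Mul (Fac false 7 false) (Fac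 false 8 false)))))))))))))); (Mul (Add (Mon false 1 0 0 4) (Add (Mon false 1 2 0 4) (Add (Mon false 1 4 2 2) (Add (Mon true 1 6 0 6) (Add (Mon true 1 8 2 2) (Add (Mon true 1 8 2 4) (Add (Mon true 1 8 2 6) (Add (Mon true 1 8 4 4) (Add (Mon false 1 10 0 8) (Add (Mon true 1 10 2 4) (Add (Mon true 1 10 4 0) (Add (Mon true 1 10 4 2) (Add (Mon true 1 10 4 4) (Add (Mon false 1 12 2 4) (Add (Mon true 1 12 4 0) (Add (Mon false 1 14 2 6) (Add (Mon false 2 14 4 4) (Add (Mon false 2 14 4 6) (Add (Mon false 1 14 6 2) (Add (Mon true 2 16 2 6) (Add (Mon false 1 16 4 4) (Add (Mon false 1 16 6 0) (Add (Mon false 2 16 6 2) (Add (Mon true 1 18 2 6) (Add (Mon true 1 18 2 8) (Add (Mon true 1 18 4 4) (Add (Mon true 1 18 4 8) (Add (Mon true 1 18 6 4) (Add (Mon true 1 18 6 6) (Add (Mon false 1 20 2 10) (Add (Mon true 1 20 4 4) (Add (Mon true 1 20 4 6) (Add (Mon true 1 20 6 2) (Add (Mon true 4 20 6 4) (Add (Mon true 1 20 6 6) (Add (Mon true 1 22 4 4) (Add (Mon false 1 22 4 6) (Add (Mon true 1 22 6 2) (Add (Mon true 1 22 6 4) (Add (Mon true 1 22 8 0) (Add (Mon true 2 24 4 6) (Add (Mon false 1 24 4 8) (Add (Mon false 1 24 6 4) (Add (Mon false 2 24 6 6) (Add (Mon false 1 24 8 4) (Add (Mon true 1 26 4 6)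 (Add (Mon true 2 26 4 8) (Add (Mon true 1 26 4 10) (Add (Mon false 2 26 6 4) (Add (Mon false 1 26 6 6) (Add (Mon false 1 26 8 2) (Add (Mon false 2 26 8 4) (Add (Mon true 1 28 4 8) (Add (Mon true 1 28 6 6) (Add (Mon true 1 28 6 8) (Add (Mon true 1 30 6 6) (Add (Mon true 1 30 6 8) (Add (Mon false 1 30 6 10) (Add (Mon true 1 30 8 4) (Add (Mon true 1 30 8 6) (Add (Mon true 1 32 6 6) (Add (Mon false 1 32 6 8) (Add (Mon false 1 32 6 10) (Add (Mon true 1 32 8 4) (Add (Mon true 1 32 10 2) (Add (Mon false 1 34 8 8) (Add (Mon false 1 36 10 4) (Add (Mon true 1 38 8 8) (Add (Mon true 1 40 10 6) (Mon true 1 42 10 6)))))))))))))))))))))))))))))))))))))))))))))))))))))))))))))))))))))) (Inv (Mul (Mon false 1 1 2 2) (Mul (Fac true 3 true) (Mul (Fac true 7 false) (Mul (Fac false 2 true) (Mul (Fac false 3 true) (Mul (Fac false 4 false) (Mul (Fac false 4 true) (Mul (Fac false 6 false) (Mul (Fac false 6 true) (Mul (Fac false 7 false) (Fac false 8 false))))))))))))); (Mul (Add (Mon true 1 0 0 2) (Add (Mon false 1 2 0 4) (Add (Mon true 1 2 2 0) (Add (Mon false 1 4 0 4) (Add (Mon false 1 4 2 2) (Add (Mon false 1 6 0 4) (Add (Mon false 1 6 2 2) (Add (Mon true 1 8 0 6) (Add (Mon false 1 8 2 2) (Add (Mon false 1 8 2 4) (Add (Mon false 1 8 4 0) (Add (Mon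 false 1 8 4 2) (Add (Mon true 2 10 0 6) (Add (Mon true 1 10 2 2) (Add (Mon true 1 10 2 4) (Add (Mon true 1 10 2 6) (Add (Mon true 1 10 4 0) (Add (Mon true 1 10 4 2) (Add (Mon true 1 10 4 4) (Add (Mon true 1 12 0 6) (Add (Mon false 1 12 0 8) (Add (Mon true 2 12 2 4) (Add (Mon true 1 12 2 6) (Add (Mon true 1 12 4 0) (Add (Mon true 1 12 4 2) (Add (Mon true 1 12 4 4) (Add (Mon true 1 12 6 0) (Add (Mon false 1 14 0 8) (Add (Mon true 1 14 4 2) (Add (Mon true 2 14 4 4) (Add (Mon true 1 14 6 0) (Add (Mon false 1 14 6 2) (Add (Mon false 1 16 0 8) (Add (Mon false 2 16 2 4) (Add (Mon false 1 16 2 6) (Add (Mon false 1 16 4 2) (Add (Mon false 2 16 4 4) (Add (Mon false 2 16 4 6) (Add (Mon false 1 16 6 0) (Add (Mon false 2 16 6 2) (Add (Mon false 1 18 2 4) (Add (Mon false 1 18 2 8) (Add (Mon false 1 18 4 2) (Add (Mon false 2 18 4 4) (Add (Mon false 3 18 4 6) (Add (Mon false 3 18 6 2) (Add (Mon false 1 18 6 4) (Add (Mon true 1 20 0 10) (Add (Mon true 2 20 2 6) (Add (Mon true 1 20 2 8) (Add (Mon false 1 20 4 2) (Add (Mon true 1 20 4 4) (Add (Mon false 1 20 4 6) (Add (Mon true 1 20 4 8) (Add (Mon false 1 20 6 2) (Add (Mon true 1 20 6 6) (Add (Mon true 1 22 2 6) (Add (Mon true 2 22 2 8) (Add (Mon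 true 3 22 4 4) (Add (Mon true 2 22 4 6) (Add (Mon true 1 22 4 8) (Add (Mon true 1 22 6 2) (Add (Mon true 5 22 6 4) (Add (Mon true 2 22 6 6) (Add (Mon true 1 22 8 0) (Add (Mon false 1 24 2 10) (Add (Mon false 1 24 4 4) (Add (Mon true 2 24 4 6) (Add (Mon true 2 24 4 8) (Add (Mon true 2 24 6 2) (Add (Mon true 4 24 6 4) (Add (Mon true 1 24 6 6) (Add (Mon true 1 24 8 2) (Add (Mon false 2 26 2 8) (Add (Mon false 1 26 2 10) (Add (Mon false 1 26 4 4) (Add (Mon false 2 26 4 8) (Add (Mon false 1 26 6 4) (Add (Mon false 2 26 6 6) (Add (Mon false 1 26 8 4) (Add (Mon false 1 28 2 8) (Add (Mon false 1 28 2 10) (Add (Mon false 1 28 4 6) (Add (Mon false 2 28 4 8) (Add (Mon false 1 28 4 10) (Add (Mon false 3 28 6 4) (Add (Mon false 5 28 6 6) (Add (Mon false 1 28 6 8) (Add (Mon false 1 28 8 2) (Add (Mon false 2 28 8 4) (Add (Mon true 1 30 2 10) (Add (Mon false 1 30 4 6) (Add (Mon true 1 30 4 8) (Add (Mon true 1 30 4 10) (Add (Mon false 1 30 6 4) (Add (Mon false 2 30 6 6) (Add (Mon false 1 30 8 2) (Add (Mon false 1 30 8 4) (Add (Mon true 1 32 2 12) (Add (Mon true 3 32 4 8) (Add (Mon true 1 32 4 10) (Add (Mon false 1 32 6 4) (Add (Mon true 2 32 6 6) (Add (Mon true 5 32 6 8) (Add (Mon true 2 32 8 4) (Add (Mon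 true 1 32 8 6) (Add (Mon false 1 34 4 8) (Add (Mon true 1 34 4 10) (Add (Mon true 4 34 6 6) (Add (Mon true 4 34 6 8) (Add (Mon false 1 34 6 10) (Add (Mon true 1 34 8 4) (Add (Mon true 3 34 8 6) (Add (Mon true 1 34 10 2) (Add (Mon false 1 36 4 8) (Add (Mon false 1 36 4 10) (Add (Mon true 1 36 6 6) (Add (Mon false 1 36 6 8) (Add (Mon false 2 36 6 10) (Add (Mon true 1 36 8 6) (Add (Mon false 1 36 8 8) (Add (Mon false 1 38 4 10) (Add (Mon false 1 38 4 12) (Add (Mon false 3 38 6 8) (Add (Mon false 3 38 6 10) (Add (Mon false 1 38 8 6) (Add (Mon false 2 38 8 8) (Add (Mon false 1 38 10 4) (Add (Mon false 1 40 4 10) (Add (Mon true 1 40 4 12) (Add (Mon false 1 40 6 8) (Add (Mon false 1 40 6 10) (Add (Mon false 2 40 8 6) (Add (Mon false 1 40 8 8) (Add (Mon false 1 40 10 4) (Add (Mon true 1 42 4 12) (Add (Mon false 1 42 6 8) (Add (Mon true 1 42 6 10) (Add (Mon true 1 42 6 12) (Add (Mon true 2 42 8 8) (Add (Mon false 1 42 10 4) (Add (Mon true 1 42 10 6) (Add (Mon true 2 44 6 10) (Add (Mon true 1 44 6 12) (Add (Mon true 1 44 8 8) (Add (Mon true 1 44 8 10) (Add (Mon true 2 44 10 6) (Add (Mon false 1 46 6 12) (Add (Mon true 1 46 10 6) (Add (Mon false 1 48 8 10) (Add (Mon false 1 48 10 8) (Add (Mon false 1 50 8 10) (Add (Mon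 false 1 50 10 8) (Add (Mon true 1 52 8 12) (Add (Mon false 1 52 10 8) (Mon true 1 54 10 10)))))))))))))))))))))))))))))))))))))))))))))))))))))))))))))))))))))))))))))))))))))))))))))))))))))))))))))))))))))))))))))))))))))))))))))))))))))))))))) (Inv (Mul (Mon false 1 2 2 2) (Mul (Fac true 3 true) (Mul (Fac true 7 false) (Mul (Fac true 7 true) (Mul (Fac false 3 true) (Mul (Fac false 4 false) (Mul (Fac false 4 true) (Mul (Fac false 6 false) (Mul (Fac false 6 true) (Mul (Fac false 7 false) (Mul (Fac false 7 true) (Fac false 8 false)))))))))))))); (Mul (Add (Mon true 1 0 0 2) (Add (Mon true 1 0 2 0) (Add (Mon false 1 6 0 4) (Add (Mon false 1 6 4 0) (Add (Mon false 1 8 2 2) (Add (Mon false 1 8 2 4) (Add (Mon false 1 8 4 2) (Add (Mon true 1 10 0 6) (Add (Mon true 1 10 6 0) (Add (Mon true 1 12 0 6) (Add (Mon true 1 12 6 0) (Add (Mon true 1 14 2 4) (Add (Mon true 1 14 4 2) (Add (Mon true 2 14 4 4) (Add (Mon false 2 16 2 4) (Add (Mon false 2 16 4 2) (Add (Mon false 1 18 2 4) (Add (Mon false 1 18 2 6) (Add (Mon false 1 18 4 2) (Add (Mon false 1 18 4 6) (Add (Mon false 1 18 6 2) (Add (Mon false 1 18 6 4) (Add (Mon false 1 20 2 6) (Add (Mon false 1 20 4 4) (Add (Mon false 1 20 4 6) (Add (Mon false 1 20 6 2) (Add (Mon false 1 20 6 4) (Add (Mon true 1 22 2 6) (Add (Mon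 true 1 22 4 4) (Add (Mon true 1 22 6 2) (Add (Mon true 1 24 2 8) (Add (Mon false 2 24 4 4) (Add (Mon true 2 24 4 6) (Add (Mon true 2 24 6 4) (Add (Mon true 1 24 8 2) (Add (Mon false 1 26 4 4) (Add (Mon true 1 26 4 6) (Add (Mon true 1 26 6 4) (Add (Mon false 1 28 2 8) (Add (Mon false 1 28 4 6) (Add (Mon false 1 28 6 4) (Add (Mon false 1 28 6 6) (Add (Mon false 1 28 8 2) (Add (Mon false 1 30 4 6) (Add (Mon false 1 30 4 8) (Add (Mon false 1 30 6 4) (Add (Mon false 4 30 6 6) (Add (Mon false 1 30 8 4) (Add (Mon false 1 32 4 6) (Add (Mon false 1 32 6 4) (Add (Mon false 1 32 6 6) (Add (Mon true 1 34 6 6) (Add (Mon true 1 34 6 8) (Add (Mon true 1 34 8 6) (Add (Mon true 2 36 6 6) (Add (Mon true 2 36 6 8) (Add (Mon true 2 36 8 6) (Add (Mon false 1 40 4 10) (Add (Mon false 1 40 6 8) (Add (Mon false 1 40 8 6) (Add (Mon false 1 40 10 4) (Add (Mon false 1 42 4 10) (Add (Mon false 1 42 6 8) (Add (Mon false 1 42 8 6) (Add (Mon false 1 42 10 4) (Add (Mon true 1 46 6 10) (Add (Mon true 1 46 8 8) (Add (Mon true 1 46 10 6) (Add (Mon false 1 52 8 10) (Mon false 1 52 10 8)))))))))))))))))))))))))))))))))))))))))))))))))))))))))))))))))))))) (Inv (Mul (Mon false 1 1 2 2) (Mul (Fac true 7 false) (Mul (Fac true 7 true) (Mul (Fac false 4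 false) (Mul (Fac false 4 true) (Mul (Fac false 6 false) (Mul (Fac false 6 true) (Mul (Fac false 7 false) (Mul (Fac false 7 true) (Mul (Fac false 8 false) (Fac false 8 true))))))))))))); (Mul (Add (Mon false 1 8 0 2) (Add (Mon true 1 12 0 4) (Add (Mon true 1 16 2 2) (Add (Mon true 1 16 4 2) (Add (Mon false 1 20 2 4) (Add (Mon false 1 20 4 4) (Add (Mon false 1 22 4 2) (Add (Mon true 1 24 4 2) (Add (Mon true 1 26 2 4) (Add (Mon true 1 26 4 4) (Add (Mon true 1 26 6 2) (Add (Mon false 1 28 4 4) (Add (Mon true 1 28 6 2) (Add (Mon false 1 30 2 6) (Add (Mon false 1 30 6 4) (Add (Mon true 1 32 4 4) (Add (Mon false 1 32 6 4) (Add (Mon false 1 32 8 2) (Add (Mon true 1 34 4 4) (Add (Mon false 1 34 6 4) (Add (Mon false 1 36 4 6) (Add (Mon true 1 36 8 4) (Add (Mon false 1 38 4 6) (Add (Mon true 1 38 6 6) (Add (Mon true 1 40 4 6) (Add (Mon true 1 40 6 4) (Add (Mon true 1 42 4 6) (Add (Mon false 1 44 4 8) (Add (Mon false 1 44 6 6) (Add (Mon false 1 46 4 8) (Add (Mon false 1 46 6 6) (Add (Mon true 1 50 6 8) (Add (Mon true 1 50 10 4) (Add (Mon true 1 52 8 6) (Add (Mon false 1 54 10 6) (Mon false 1 56 8 8)))))))))))))))))))))))))))))))))))) (Inv (Mul (Mon false 1 0 2 0) (Mul (Fac true 7 false) (Mul (Fac true 7 true) (Mul (Fac true 9 true) (Mul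 (Fac false 4 false) (Mul (Fac false 6 false) (Mul (Fac false 6 true) (Mul (Fac false 7 false) (Mul (Fac false 7 true) (Mul (Fac false 8 false) (Mul (Fac false 8 true) (Fac false 9 true))))))))))))))];
  [:: (Mul (Add (Mon true 1 17 2 4) (Add (Mon false 1 21 4 4) (Add (Mon false 1 23 2 6) (Add (Mon true 1 23 4 0) (Add (Mon true 1 25 4 2) (Add (Mon true 1 27 4 6) (Add (Mon false 1 27 6 0) (Add (Mon false 1 29 4 2) (Add (Mon false 1 29 6 2) (Add (Mon false 1 31 4 4) (Add (Mon true 2 33 6 2) (Add (Mon true 1 35 6 4) (Add (Mon false 1 37 8 2) (Add (Mon false 1 39 6 4) (Mon true 1 43 8 4))))))))))))))) (Inv (Mul (Fac true 1 true) (Mul (Fac true 3 true) (Mul (Fac true 7 false) (Mul (Fac true 9 false) (Mul (Fac false 1 true) (Mul (Fac false 2 true) (Mul (Fac false 3 true) (Mul (Fac false 4 true) (Mul (Fac false 6 false) (Mul (Fac false 7 false) (Mul (Fac false 8 false) (Fac false 9 false)))))))))))))); (Mul (Add (Mon true 1 12 2 2) (Add (Mon false 1 16 2 4) (Add (Mon false 1 16 2 6) (Add (Mon false 1 16 4 2) (Add (Mon false 1 18 2 4) (Add (Mon false 1 20 4 0) (Add (Mon true 1 20 4 4) (Add (Mon true 1 20 4 6) (Add (Mon true 1 22 2 6) (Add (Mon true 1 22 4 4) (Add (Mon false 1 24 2 6) (Add (Mon true 1 24 4 4) (Add (Mon true 1 24 6 0) (Add (Mon false 1 26 2 8) (Add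 (Mon false 1 26 4 6) (Add (Mon true 1 28 2 10) (Add (Mon true 1 28 4 6) (Add (Mon false 1 28 6 4) (Add (Mon false 1 30 4 4) (Add (Mon true 1 30 4 8) (Add (Mon false 1 32 4 6) (Add (Mon false 1 32 4 10) (Add (Mon false 1 32 6 2) (Add (Mon false 1 34 4 6) (Add (Mon true 1 34 6 4) (Add (Mon false 1 36 4 8) (Add (Mon true 1 36 6 4) (Add (Mon true 1 36 6 6) (Add (Mon true 1 36 8 2) (Add (Mon true 1 38 6 6) (Add (Mon false 1 40 6 6) (Add (Mon true 1 40 6 8) (Add (Mon false 1 40 8 4) (Add (Mon false 1 42 6 6) (Add (Mon true 1 44 8 6) (Mon true 1 46 8 6)))))))))))))))))))))))))))))))))))) (Inv (Mul (Mon false 1 0 0 2) (Mul (Fac true 3 true) (Mul (Fac true 7 false) (Mul (Fac true 9 false) (Mul (Fac false 2 true) (Mul (Fac false 3 true) (Mul (Fac false 4 true) (Mul (Fac false 6 false) (Mul (Fac false 6 true) (Mul (Fac false 7 false) (Mul (Fac false 8 false) (Fac false 9 false)))))))))))))); (Mul (Add (Mon false 1 9 2 0) (Add (Mon true 1 11 2 2) (Add (Mon true 1 13 2 2) (Add (Mon true 1 13 4 0) (Add (Mon true 1 15 2 2) (Add (Mon true 1 15 2 4) (Add (Mon false 1 15 4 2) (Add (Mon false 1 17 2 4) (Add (Mon false 1 17 2 6) (Add (Mon false 1 17 4 2) (Add (Mon false 2 19 2 4) (Add (Mon false 1 19 2 6) (Add (Mon false 1 19 4 0) (Add (Mon false 1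 19 4 2) (Add (Mon false 1 19 4 4) (Add (Mon false 1 21 2 4) (Add (Mon true 1 21 4 4) (Add (Mon true 1 21 4 6) (Add (Mon true 1 23 2 4) (Add (Mon true 1 23 2 6) (Add (Mon true 2 23 4 4) (Add (Mon true 1 23 4 6) (Add (Mon true 1 23 6 0) (Add (Mon true 1 25 2 6) (Add (Mon true 1 25 2 8) (Add (Mon true 2 25 4 4) (Add (Mon false 1 27 2 8) (Add (Mon true 1 27 4 2) (Add (Mon false 1 27 4 4) (Add (Mon false 1 27 4 6) (Add (Mon false 2 29 2 8) (Add (Mon false 1 29 4 4) (Add (Mon false 1 29 4 6) (Add (Mon false 1 29 4 8) (Add (Mon false 1 29 6 4) (Add (Mon false 1 31 2 8) (Add (Mon true 1 31 2 10) (Add (Mon false 1 31 4 6) (Add (Mon true 1 31 4 8) (Add (Mon false 1 31 6 2) (Add (Mon true 1 33 2 8) (Add (Mon true 1 33 2 10) (Add (Mon true 1 33 4 4) (Add (Mon false 1 33 4 6) (Add (Mon true 2 33 4 8) (Add (Mon false 1 33 6 2) (Add (Mon true 1 33 6 4) (Add (Mon true 1 35 2 10) (Add (Mon false 1 35 4 6) (Add (Mon true 2 35 4 8) (Add (Mon false 1 35 4 10) (Add (Mon true 1 35 6 6) (Add (Mon true 1 37 4 6) (Add (Mon false 1 37 4 8) (Add (Mon false 1 37 4 10) (Add (Mon true 1 37 6 6) (Add (Mon true 1 37 8 2) (Add (Mon false 1 39 2 12) (Add (Mon false 1 39 4 8) (Add (Mon false 1 39 4 10) (Add (Mon true 1 39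 6 4) (Add (Mon true 1 39 6 6) (Add (Mon false 1 39 6 8) (Add (Mon true 1 41 6 4) (Add (Mon false 2 41 6 6) (Add (Mon false 1 41 8 4) (Add (Mon true 1 43 4 8) (Add (Mon true 1 43 4 12) (Add (Mon false 2 43 6 6) (Add (Mon true 1 43 6 8) (Add (Mon false 1 43 8 4) (Add (Mon false 1 45 6 6) (Add (Mon false 1 45 8 4) (Add (Mon true 1 45 8 6) (Add (Mon true 1 47 4 10) (Add (Mon true 2 47 8 6) (Add (Mon false 1 49 4 12) (Add (Mon true 1 49 6 8) (Add (Mon true 1 49 8 6) (Add (Mon true 1 51 6 8) (Add (Mon false 1 51 6 10) (Add (Mon false 1 51 8 8) (Add (Mon false 1 53 6 10) (Add (Mon true 1 53 6 12) (Add (Mon false 1 53 8 8) (Add (Mon false 1 55 8 8) (Mon true 1 57 8 10))))))))))))))))))))))))))))))))))))))))))))))))))))))))))))))))))))))))))))))))))))))) (Inv (Mul (Mon false 1 0 0 2) (Mul (Fac true 3 true) (Mul (Fac true 7 false) (Mul (Fac true 7 true) (Mul (Fac true 9 false) (Mul (Fac false 3 true) (Mul (Fac false 4 true) (Mul (Fac false 6 false) (Mul (Fac false 6 true) (Mul (Fac false 7 false) (Mul (Fac false 7 true) (Mul (Fac false 8 false) (Fac false 9 false))))))))))))))); (Mul (Add (Mon false 1 8 2 0) (Add (Mon true 1 12 4 0) (Add (Mon true 1 16 2 2) (Add (Mon true 1 16 2 4) (Add (Mon false 1 20 4 2) (Add (Mon false 1 20 4 4) (Add (Mon false 1 22 2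 4) (Add (Mon true 1 24 2 4) (Add (Mon true 1 26 2 6) (Add (Mon true 1 26 4 2) (Add (Mon true 1 26 4 4) (Add (Mon true 1 28 2 6) (Add (Mon false 1 28 4 4) (Add (Mon false 1 30 4 6) (Add (Mon false 1 30 6 2) (Add (Mon false 1 32 2 8) (Add (Mon true 1 32 4 4) (Add (Mon false 1 32 4 6) (Add (Mon true 1 34 4 4) (Add (Mon false 1 34 4 6) (Add (Mon true 1 36 4 8) (Add (Mon false 1 36 6 4) (Add (Mon false 1 38 6 4) (Add (Mon true 1 38 6 6) (Add (Mon true 1 40 4 6) (Add (Mon true 1 40 6 4) (Add (Mon true 1 42 6 4) (Add (Mon false 1 44 6 6) (Add (Mon false 1 44 8 4) (Add (Mon false 1 46 6 6) (Add (Mon false 1 46 8 4) (Add (Mon true 1 50 4 10) (Add (Mon true 1 50 8 6) (Add (Mon true 1 52 6 8) (Add (Mon false 1 54 6 10) (Mon false 1 56 8 8)))))))))))))))))))))))))))))))))))) (Inv (Mul (Mon false 1 0 0 2) (Mul (Fac true 7 false) (Mul (Fac true 7 true) (Mul (Fac true 9 false) (Mul (Fac false 4 true) (Mul (Fac false 6 false) (Mul (Fac false 6 true) (Mul (Fac false 7 false) (Mul (Fac false 7 true) (Mul (Fac false 8 false) (Mul (Fac false 8 true) (Fac false 9 false)))))))))))))); (Mul (Add (Mon false 1 25 2 2) (Add (Mon true 1 29 2 4) (Add (Mon true 1 29 4 2) (Add (Mon false 1 33 4 4) (Add (Mon false 1 43 4 4) (Add (Mon true 1 47 4 6) (Add (Mon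 true 1 47 6 4) (Add (Mon false 1 51 4 6) (Add (Mon false 1 51 6 4) (Add (Mon false 1 51 6 6) (Add (Mon true 1 55 4 8) (Add (Mon true 2 55 6 6) (Add (Mon true 1 55 8 4) (Add (Mon false 1 59 6 8) (Mon false 1 59 8 6))))))))))))))) (Inv (Mul (Fac true 7 false) (Mul (Fac true 7 true) (Mul (Fac true 9 false) (Mul (Fac true 9 true) (Mul (Fac false 6 false) (Mul (Fac false 6 true) (Mul (Fac false 7 false) (Mul (Fac false 7 true) (Mul (Fac false 8 false) (Mul (Fac false 8 true) (Mul (Fac false 9 false) (Fac false 9 true))))))))))))))]].

Ltac reify_gen s qm qn t :=
  lazymatch t with
  | (?a + ?b)%R => let ra := reify_gen s qm qn a in let rb := reify_gen s qm qn b in constr:(Add ra rb)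
  | (- ?a)%R => let ra := reify_gen s qm qn a in constr:(Opp ra)
  | (?a * ?b)%R => let ra := reify_gen s qm qn a in let rb := reify_gen s qm qn b in constr:(Mul ra rb)
  | (?a ^-1)%R => let ra := reify_gen s qm qn a in constr:(Inv ra)
  | (?a ^+ ?n)%R => let ra := reify_gen s qm qn a in constr:(Pw ra n)
  | 0%R => constr:(Z)
  | 1%R => constr:(O)
  | (?n%:R)%R => constr:(Nc n)
  | s => constr:(Sv)
  | qm => constr:(Mv)
  | qn => constr:(Nv)
  end.

Ltac nz1 H s qm qn :=
  lazymatch goal with
  | |- is_true (?x != 0) =>
     first [ exact: (hs H) | exact: (hm H) | exact: (hn H)
           | lazymatch x with
             | (?a * ?b)%R => apply: mulf_neq0; [nz1 H s qm qn | nz1 H s qm qn]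
             | (?a ^+ ?n)%R => apply: expf_neq0; nz1 H s qm qn
             | _ => let e := reify_gen s qm qn x in
                    apply: (@hp _ s qm qn H e); vm_compute; reflexivity
             end ]
  end.

Ltac nzF :=
  repeat match goal with |- is_true (_ && _) => apply/andP; split end;
  match goal with H : hypsF ?s ?qm ?qn |- _ => nz1 H s qm qn end.

Inductive oe := OC (e : ex) | OEm | OEn | OAdd (x y : oe) | OOpp (x : oe) | OMul (x y : oe) | OL (L : mat).

Fixpoint oint (x : oe) : ore :=
  match x with
  | OC e => oc (evK e) | OEm => oEm | OEn => oEn
  | OAdd x y => oadd (oint x) (oint y) | OOpp x => oopp (oint x)
  | OMul x y => omul (oint x) (oint y) | OL L => ofe L
  end.

Fixpoint ocomp (x : oe) : mat :=
  match x with
  | OC e => [:: [:: e]] | OEm => [:: [:: Z]; [:: O]] | OEn => [:: [:: Z; O]]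
  | OAdd x y => eadd (ocomp x) (ocomp y) | OOpp x => eopp (ocomp x)
  | OMul x y => emul (ocomp x) (ocomp y) | OL L => L
  end.

Lemma oint_comp x : oint x = ofe (ocomp x).
Proof.
elim: x => [e|||x IHx y IHy|x IHx|x IHx y IHy|L] /=.
- exact: oc_ofe.
- exact: oEm_ofe.
- exact: oEn_ofe.
- by rewrite IHx IHy oadd_ofe.
- by rewrite IHx oopp_ofe.
- by rewrite IHx IHy omul_ofe.
- by [].
Qed.

Ltac reify_ore t :=
  lazymatch t with
  | oadd ?a ?b => let ra := reify_ore a in let rb := reify_ore b in constr:(OAdd ra rb)
  | oopp ?a => let ra := reify_ore a in constr:(OOpp ra)
  | omul ?a ?b => let ra := reify_ore a in let rb := reify_ore b in constr:(OMul ra rb)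
  | oc ?c => let e := reify_gen s_ Qm Qn c in constr:(OC e)
  | oEm => constr:(OEm)
  | oEn => constr:(OEn)
  | ofe ?L => constr:(OL L)
  end.

Ltac ore_norm :=
  match goal with |- ?l = ?r =>
    let x := reify_ore l in let y := reify_ore r in
    transitivity (oint x); [reflexivity|];
    transitivity (oint y); [|reflexivity];
    rewrite !oint_comp
  end.

Ltac solve_entry :=
  apply: transfer => F s qm qn H; cbn [ev]; field; nzF.

Ltac ore_check :=
  apply: ofe_eq;
  match goal with |- allz2 ?M =>
    let M' := eval vm_compute in M in
    rewrite (_ : M = M'); [| vm_compute; reflexivity] end;
  cbn [allz2 allzr isZ];
  repeat match goal with |- _ /\ _ => split end;
  try exact I.

Lemma Ym_eq : Y sEm Qm = ofe LYm.
Proof.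
rewrite /Y /u2 /u1 /sEm /Phi.
ore_norm.
ore_check.
all: solve_entry.
Qed.

Lemma Yn_eq : Y sEn Qn = ofe LYn.
Proof. rewrite /Y /u2 /u1 /sEn /Phi. ore_norm. ore_check. all: solve_entry. Qed.

Lemma PYm_eq : omul (P1 sEm Qm) (Y sEm Qm) = ofe LPYm.
Proof. rewrite Ym_eq /P1 /sEm. ore_norm. ore_check. all: solve_entry. Qed.

Lemma PYn_eq : omul (P1 sEn Qn) (Y sEn Qn) = ofe LPYn.
Proof. rewrite Yn_eq /P1 /sEn. ore_norm. ore_check. all: solve_entry. Qed.

Lemma P0m_eq : P0 sEm Qm Qn = ofe LP0m.
Proof.
rewrite /P0; cbv beta zeta.
rewrite Ym_eq /u2 /u1 /v2 /v1 /sEm /Phi.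
ore_norm. ore_check. all: solve_entry.
Qed.

Lemma P0n_eq : P0 sEn Qn Qm = ofe LP0n.
Proof.
rewrite /P0; cbv beta zeta.
rewrite Yn_eq /u2 /u1 /v2 /v1 /sEn /Phi.
ore_norm. ore_check. all: solve_entry.
Qed.

Lemma Am_eq : frakAm = ofe LAm.
Proof. rewrite /frakAm P0m_eq /P1 /sEm. ore_norm. ore_check. all: solve_entry. Qed.

Lemma An_eq : frakAn = ofe LAn.
Proof. rewrite /frakAn P0n_eq /P1 /sEn. ore_norm. ore_check. all: solve_entry. Qed.

Lemma fin_supp_ofe L : fin_supp (ofe L).
Proof.
exists (maxn (size L) (width L)) => i j H.
rewrite /ofe nth2_out //.
by move: H => /orP [H|H]; apply/orP; [left|right]; lia.
Qed.

Theorem proposition4p5 :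
  exists C : ore, fin_supp C /\ bigop_elt = omul C Abi.
Proof.
exists (ofe LC); split; first exact: fin_supp_ofe.
rewrite /bigop_elt PYn_eq PYm_eq Am_eq An_eq /Abi.
ore_norm. ore_check. all: solve_entry.
Qed.
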